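(* Let $\mathbf{S}$ ($n\times n$), $\hat{\mathbf{U}}$ ($m\times n$), $\mathbf{V}$ ($n\times m$) be constant complex matrices and $\hat{\mathbf{K}}$ an $n\times n$ matrix with $\mathbf{S}\hat{\mathbf{K}}+\hat{\mathbf{K}}\mathbf{S}=\mathbf{V}\hat{\mathbf{U}}$. Let $\hat{\mathbf{\Xi}}=e^{-2(x\mathbf{S}+t\mathbf{S}^3)}$, $x,t\in\mathbb{R}$. Then, wherever $\mathbf{I}-\hat{\mathbf{K}}\hat{\mathbf{\Xi}}$ is invertible, $u=\phi_x$ with $\phi=\hat{\mathbf{U}}\hat{\mathbf{\Xi}}(\mathbf{I}-\hat{\mathbf{K}}\hat{\mathbf{\Xi}})^{-1}\mathbf{V}$ solves the $m\times m$ matrix KdV equation $u_t-\tfrac14u_{xxx}-\tfrac32(u^2)_x=0$.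
   Context: $\mathbf{I}=I_n$; subscripts $x,t$ denote partial derivatives. *)

(* Defs.v *)
(* classical reals, complex numbers as pairs of reals,
   matrices as functions nat -> nat -> Cplx with dimensions passed explicitly. *)
From Stdlib Require Import Reals Lra ClassicalEpsilon Factorial.
Open Scope R_scope.

Record Cplx := mkCplx { re : R; im : R }.

Definition C0 : Cplx := mkCplx 0 0.
Definition C1 : Cplx := mkCplx 1 0.
Definition RtoC (r : R) : Cplx := mkCplx r 0.
Definition Cadd (a b : Cplx) : Cplx := mkCplx (re a + re b) (im a + im b).
Definition Copp (a : Cplx) : Cplx := mkCplx (- re a) (- im a).
Definition Cmul (a b : Cplx) : Cplx :=
  mkCplx (re a * re b - im a * im b) (re a * im b + im a * re b).

Fixpoint Csum (f : nat -> Cplx) (k : nat) : Cplx :=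
  match k with
  | O => C0
  | S k' => Cadd (Csum f k') (f k')
  end.

(* A matrix; only entries with indices below the intended dimensions matter. *)
Definition Mat := nat -> nat -> Cplx.

Definition Mid : Mat := fun i j => if Nat.eqb i j then C1 else C0.
Definition Madd (A B : Mat) : Mat := fun i j => Cadd (A i j) (B i j).
Definition Msub (A B : Mat) : Mat := fun i j => Cadd (A i j) (Copp (B i j)).
Definition Mscale (c : Cplx) (A : Mat) : Mat := fun i j => Cmul c (A i j).
Definition Mmul (p : nat) (A B : Mat) : Mat :=
  fun i j => Csum (fun k => Cmul (A i k) (B k j)) p.
Fixpoint Mpow (n : nat) (A : Mat) (k : nat) : Mat :=
  match k with
  | O => Mid
  | S k' => Mmul n (Mpow n A k') A
  end.

Definition Meq (r c : nat) (A B : Mat) : Prop :=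
  forall i j, (i < r)%nat -> (j < c)%nat -> A i j = B i j.

Definition Ccv (s : nat -> Cplx) (l : Cplx) : Prop :=
  Un_cv (fun N => re (s N)) (re l) /\ Un_cv (fun N => im (s N)) (im l).

Definition Mexp_partial (n : nat) (A : Mat) (N : nat) : Mat :=
  fun i j => Csum (fun k => Cmul (RtoC (/ INR (fact k))) (Mpow n A k i j)) (S N).
Definition Mexp (n : nat) (A : Mat) : Mat :=
  epsilon (inhabits Mid)
    (fun L => forall i j, (i < n)%nat -> (j < n)%nat ->
       Ccv (fun N => Mexp_partial n A N i j) (L i j)).

Definition Minvertible (n : nat) (A : Mat) : Prop :=
  exists B, Meq n n (Mmul n A B) Mid /\ Meq n n (Mmul n B A) Mid.
Definition Minv (n : nat) (A : Mat) : Mat :=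
  epsilon (inhabits Mid)
    (fun B => Meq n n (Mmul n A B) Mid /\ Meq n n (Mmul n B A) Mid).

Definition has_dx (r c : nat) (f : R -> R -> Mat) (x t : R) (L : Mat) : Prop :=
  forall i j, (i < r)%nat -> (j < c)%nat ->
    derivable_pt_lim (fun y => re (f y t i j)) x (re (L i j)) /\
    derivable_pt_lim (fun y => im (f y t i j)) x (im (L i j)).
Definition has_dt (r c : nat) (f : R -> R -> Mat) (x t : R) (L : Mat) : Prop :=
  forall i j, (i < r)%nat -> (j < c)%nat ->
    derivable_pt_lim (fun s => re (f x s i j)) t (re (L i j)) /\
    derivable_pt_lim (fun s => im (f x s i j)) t (im (L i j)).

Definition Xi (n : nat) (S : Mat) (x t : R) : Mat :=
  Mexp n (Madd (Mscale (RtoC (-2 * x)) S) (Mscale (RtoC (-2 * t)) (Mpow n S 3))).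

Definition Phi (n : nat) (S K U V : Mat) (x t : R) : Mat :=
  Mmul n (Mmul n U (Xi n S x t))
         (Mmul n (Minv n (Msub Mid (Mmul n K (Xi n S x t)))) V).

(* Main.v *)
Require Import Defs.
From Stdlib Require Import Reals.
From Stdlib Require Import Lra Lia ZArith List Bool Ring Setoid FunctionalExtensionality ClassicalEpsilon Factorial.
Open Scope R_scope.

Ltac mext := apply functional_extensionality; intro; apply functional_extensionality; intro.

Lemma Ceq (a b : Cplx) : re a = re b -> im a = im b -> a = b.
Proof. destruct a, b; simpl; intros; subst; reflexivity. Qed.

Definition Csub (a b : Cplx) := Cadd a (Copp b).

Lemma Cring : ring_theory Defs.C0 Defs.C1 Cadd Cmul Csub Copp (@eq Cplx).
Proof.
  constructor; intros; apply Ceq; unfold Csub, Cadd, Cmul, Copp, Defs.C0, Defs.C1; simpl; ring.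
Qed.
Add Ring Cring : Cring.

Lemma test (a b c : Cplx) : Cmul (Cadd a b) c = Cadd (Cmul c a) (Cmul b c).
Proof. ring. Qed.

Notation CI := Defs.C1.
Notation CZ := Defs.C0.

Lemma Csum_ext f g p : (forall k, (k < p)%nat -> f k = g k) -> Csum f p = Csum g p.
Proof. induction p; intros H; simpl; auto. rewrite IHp by (intros; apply H; lia). rewrite H by lia; auto. Qed.

Lemma Csum_add f g p : Csum (fun k => Cadd (f k) (g k)) p = Cadd (Csum f p) (Csum g p).
Proof. induction p; simpl. apply Ceq; simpl; ring. rewrite IHp; ring. Qed.

Lemma Csum_opp f p : Csum (fun k => Copp (f k)) p = Copp (Csum f p).
Proof. induction p; simpl. apply Ceq; simpl; ring. rewrite IHp; ring. Qed.

Lemma Csum_mull c f p : Csum (fun k => Cmul c (f k)) p = Cmul c (Csum f p).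
Proof. induction p; simpl. apply Ceq; simpl; ring. rewrite IHp; ring. Qed.

Lemma Csum_mulr c f p : Csum (fun k => Cmul (f k) c) p = Cmul (Csum f p) c.
Proof. induction p; simpl. apply Ceq; simpl; ring. rewrite IHp; ring. Qed.

Lemma Csum_zero p : Csum (fun _ => CZ) p = CZ.
Proof. induction p; simpl; auto. rewrite IHp; ring. Qed.

Lemma Csum_swap (f : nat -> nat -> Cplx) p q :
  Csum (fun k => Csum (fun l => f k l) q) p = Csum (fun l => Csum (fun k => f k l) p) q.
Proof.
  induction p; simpl.
  - rewrite Csum_zero; auto.
  - rewrite IHp, <- Csum_add; auto.
Qed.

Lemma Csum_delta (f : nat -> Cplx) p i : (i < p)%nat ->
  Csum (fun k => Cmul (if Nat.eqb i k then CI else CZ) (f k)) p = f i.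
Proof.
  induction p; intros H; [lia|]. simpl.
  destruct (Nat.eq_dec i p).
  - subst. rewrite Nat.eqb_refl. rewrite Csum_ext with (g := fun _ => CZ).
    rewrite Csum_zero; ring. intros k Hk. destruct (Nat.eqb_spec p k); [lia|ring].
  - rewrite IHp by lia. destruct (Nat.eqb_spec i p); [lia|ring].
Qed.

Lemma Csum_delta_r (f : nat -> Cplx) p j : (j < p)%nat ->
  Csum (fun k => Cmul (f k) (if Nat.eqb k j then CI else CZ)) p = f j.
Proof.
  intros H. rewrite <- (Csum_delta f p j H). apply Csum_ext. intros k _.
  destruct (Nat.eqb_spec k j), (Nat.eqb_spec j k); try lia; ring.
Qed.

Lemma Mmul_assoc p q A B C : Mmul p (Mmul q A B) C = Mmul q A (Mmul p B C).
Proof.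
  apply functional_extensionality; intro i; apply functional_extensionality; intro j.
  unfold Mmul.
  rewrite (Csum_ext _ (fun k => Csum (fun l => Cmul (A i l) (Cmul (B l k) (C k j))) q)).
  2:{ intros k _. rewrite <- Csum_mulr. apply Csum_ext; intros; ring. }
  rewrite Csum_swap. apply Csum_ext; intros; rewrite <- Csum_mull; auto.
Qed.

Lemma Mmul_addl p A B C : Mmul p (Madd A B) C = Madd (Mmul p A C) (Mmul p B C).
Proof.
  apply functional_extensionality; intro i; apply functional_extensionality; intro j.
  unfold Mmul, Madd. rewrite <- Csum_add. apply Csum_ext; intros; ring.
Qed.
Lemma Mmul_addr p A B C : Mmul p A (Madd B C) = Madd (Mmul p A B) (Mmul p A C).
Proof.
  apply functional_extensionality; intro i; apply functional_extensionality; intro j.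
  unfold Mmul, Madd. rewrite <- Csum_add. apply Csum_ext; intros; ring.
Qed.
Lemma Mmul_subl p A B C : Mmul p (Msub A B) C = Msub (Mmul p A C) (Mmul p B C).
Proof.
  apply functional_extensionality; intro i; apply functional_extensionality; intro j.
  unfold Mmul, Msub. rewrite <- Csum_opp, <- Csum_add. apply Csum_ext; intros; ring.
Qed.
Lemma Mmul_subr p A B C : Mmul p A (Msub B C) = Msub (Mmul p A B) (Mmul p A C).
Proof.
  apply functional_extensionality; intro i; apply functional_extensionality; intro j.
  unfold Mmul, Msub. rewrite <- Csum_opp, <- Csum_add. apply Csum_ext; intros; ring.
Qed.
Lemma Mmul_scalel p c A B : Mmul p (Mscale c A) B = Mscale c (Mmul p A B).
Proof.
  apply functional_extensionality; intro i; apply functional_extensionality; intro j.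
  unfold Mmul, Mscale. rewrite <- Csum_mull. apply Csum_ext; intros; ring.
Qed.
Lemma Mmul_scaler p c A B : Mmul p A (Mscale c B) = Mscale c (Mmul p A B).
Proof.
  apply functional_extensionality; intro i; apply functional_extensionality; intro j.
  unfold Mmul, Mscale. rewrite <- Csum_mull. apply Csum_ext; intros; ring.
Qed.

Lemma Mid_l n A i j : (i < n)%nat -> Mmul n Mid A i j = A i j.
Proof. intros. unfold Mmul, Mid. apply (Csum_delta (fun k => A k j)); auto. Qed.
Lemma Mid_r n A i j : (j < n)%nat -> Mmul n A Mid i j = A i j.
Proof. intros. unfold Mmul, Mid. apply (Csum_delta_r (fun k => A i k)); auto. Qed.

Lemma Meq_refl r c A : Meq r c A A.
Proof. intros i j _ _; auto. Qed.
Lemma Meq_sym r c A B : Meq r c A B -> Meq r c B A.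
Proof. intros H i j Hi Hj; symmetry; auto. Qed.
Lemma Meq_trans r c A B C : Meq r c A B -> Meq r c B C -> Meq r c A C.
Proof. intros H1 H2 i j Hi Hj; rewrite H1, H2; auto. Qed.
Lemma Meq_mull r p c A B C : Meq r p A B -> Meq r c (Mmul p A C) (Mmul p B C).
Proof. intros H i j Hi Hj; unfold Mmul; apply Csum_ext; intros; rewrite H; auto. Qed.
Lemma Meq_mulr r p c A B C : Meq p c B C -> Meq r c (Mmul p A B) (Mmul p A C).
Proof. intros H i j Hi Hj; unfold Mmul; apply Csum_ext; intros; rewrite H; auto. Qed.
Lemma Meq_mul_in p A B C D : Meq p p B C -> Mmul p A (Mmul p B D) = Mmul p A (Mmul p C D).
Proof.
  intros H. apply functional_extensionality; intro i; apply functional_extensionality; intro j.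
  unfold Mmul; apply Csum_ext; intros k Hk; f_equal; apply Csum_ext; intros; rewrite H; auto.
Qed.
Lemma Meq_add r c A B C D : Meq r c A B -> Meq r c C D -> Meq r c (Madd A C) (Madd B D).
Proof. intros H1 H2 i j Hi Hj; unfold Madd; rewrite H1, H2; auto. Qed.
Lemma Meq_sub r c A B C D : Meq r c A B -> Meq r c C D -> Meq r c (Msub A C) (Msub B D).
Proof. intros H1 H2 i j Hi Hj; unfold Msub; rewrite H1, H2; auto. Qed.
Lemma Meq_scale r c x A B : Meq r c A B -> Meq r c (Mscale x A) (Mscale x B).
Proof. intros H1 i j Hi Hj; unfold Mscale; rewrite H1; auto. Qed.

Definition cder (f : R -> Cplx) (z : R) (l : Cplx) : Prop :=
  derivable_pt_lim (fun y => re (f y)) z (re l) /\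
  derivable_pt_lim (fun y => im (f y)) z (im l).

Lemma dpl_ext (f g : R -> R) z l l' : (forall y, f y = g y) -> l = l' ->
  derivable_pt_lim f z l -> derivable_pt_lim g z l'.
Proof.
  intros H Hl. replace g with f by (apply functional_extensionality; auto). subst; auto.
Qed.

Lemma cder_const c z : cder (fun _ => c) z CZ.
Proof.
  split; simpl.
  apply dpl_ext with (f := fct_cte (re c)) (l := 0); auto; apply derivable_pt_lim_const.
  apply dpl_ext with (f := fct_cte (im c)) (l := 0); auto; apply derivable_pt_lim_const.
Qed.

Lemma cder_add f g z a b : cder f z a -> cder g z b -> cder (fun y => Cadd (f y) (g y)) z (Cadd a b).
Proof.
  intros [H1 H2] [H3 H4]; split; simpl.
  - eapply dpl_ext; [|reflexivity|apply (derivable_pt_lim_plus _ _ _ _ _ H1 H3)]; intros; reflexivity.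
  - eapply dpl_ext; [|reflexivity|apply (derivable_pt_lim_plus _ _ _ _ _ H2 H4)]; intros; reflexivity.
Qed.

Lemma cder_opp f z a : cder f z a -> cder (fun y => Copp (f y)) z (Copp a).
Proof.
  intros [H1 H2]; split; simpl.
  - eapply dpl_ext; [|reflexivity|apply (derivable_pt_lim_opp _ _ _ H1)]; intros; reflexivity.
  - eapply dpl_ext; [|reflexivity|apply (derivable_pt_lim_opp _ _ _ H2)]; intros; reflexivity.
Qed.

Lemma cder_mul f g z a b : cder f z a -> cder g z b ->
  cder (fun y => Cmul (f y) (g y)) z (Cadd (Cmul a (g z)) (Cmul (f z) b)).
Proof.
  intros [H1 H2] [H3 H4]; split; simpl.
  - eapply dpl_ext; [| |apply (derivable_pt_lim_minus _ _ _ _ _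
        (derivable_pt_lim_mult _ _ _ _ _ H1 H3) (derivable_pt_lim_mult _ _ _ _ _ H2 H4))].
    intros; reflexivity. simpl. ring.
  - eapply dpl_ext; [| |apply (derivable_pt_lim_plus _ _ _ _ _
        (derivable_pt_lim_mult _ _ _ _ _ H1 H4) (derivable_pt_lim_mult _ _ _ _ _ H2 H3))].
    intros; reflexivity. simpl. ring.
Qed.

Lemma cder_sum (f : nat -> R -> Cplx) (l : nat -> Cplx) z p :
  (forall k, (k < p)%nat -> cder (f k) z (l k)) ->
  cder (fun y => Csum (fun k => f k y) p) z (Csum l p).
Proof.
  induction p; intros H; simpl.
  - apply cder_const.
  - apply cder_add; auto.
Qed.

Lemma cder_eq f z a b : a = b -> cder f z a -> cder f z b.
Proof. intros; subst; auto. Qed.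

Definition hasD (r c : nat) (f : R -> Mat) (z : R) (L : Mat) : Prop :=
  forall i j, (i < r)%nat -> (j < c)%nat -> cder (fun y => f y i j) z (L i j).

Lemma hasD_Meq r c f z L L' : Meq r c L L' -> hasD r c f z L -> hasD r c f z L'.
Proof. intros E H i j Hi Hj. rewrite <- E by auto. apply H; auto. Qed.

Lemma hasD_fext r c f g z L : (forall y, f y = g y) -> hasD r c f z L -> hasD r c g z L.
Proof. intros E H. replace g with f by (apply functional_extensionality; auto). auto. Qed.

Lemma hasD_const r c (A : Mat) z : hasD r c (fun _ => A) z (fun _ _ => CZ).
Proof. intros i j _ _. apply cder_const. Qed.

Lemma hasD_add r c f g z L1 L2 : hasD r c f z L1 -> hasD r c g z L2 ->
  hasD r c (fun y => Madd (f y) (g y)) z (Madd L1 L2).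
Proof. intros H1 H2 i j Hi Hj. unfold Madd. apply cder_add; auto. Qed.

Lemma hasD_sub r c f g z L1 L2 : hasD r c f z L1 -> hasD r c g z L2 ->
  hasD r c (fun y => Msub (f y) (g y)) z (Msub L1 L2).
Proof. intros H1 H2 i j Hi Hj. unfold Msub. apply cder_add; auto. apply cder_opp; auto. Qed.

Lemma hasD_scale r c x f z L : hasD r c f z L ->
  hasD r c (fun y => Mscale x (f y)) z (Mscale x L).
Proof.
  intros H i j Hi Hj. unfold Mscale.
  eapply cder_eq. 2: apply cder_mul; [apply cder_const|apply H; auto]. cbv beta; ring.
Qed.

Lemma hasD_mul r p c f g z L1 L2 : hasD r p f z L1 -> hasD p c g z L2 ->
  hasD r c (fun y => Mmul p (f y) (g y)) z (Madd (Mmul p L1 (g z)) (Mmul p (f z) L2)).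
Proof.
  intros H1 H2 i j Hi Hj. unfold Mmul, Madd. rewrite <- Csum_add.
  apply cder_sum. intros k Hk. apply cder_mul; auto.
Qed.

Definition cn (z : Cplx) : R := Rabs (re z) + Rabs (im z).

Lemma cn_pos z : 0 <= cn z.
Proof. unfold cn; pose proof (Rabs_pos (re z)); pose proof (Rabs_pos (im z)); lra. Qed.
Lemma cn_add a b : cn (Cadd a b) <= cn a + cn b.
Proof. unfold cn; simpl. pose proof (Rabs_triang (re a) (re b)); pose proof (Rabs_triang (im a) (im b)); lra. Qed.
Lemma cn_opp a : cn (Copp a) = cn a.
Proof. unfold cn; simpl; rewrite !Rabs_Ropp; auto. Qed.
Lemma cn_sub a b : cn (Cadd a (Copp b)) <= cn a + cn b.
Proof. rewrite <- (cn_opp b). apply cn_add. Qed.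
Lemma cn_mul a b : cn (Cmul a b) <= cn a * cn b.
Proof.
  unfold cn; simpl.
  pose proof (Rabs_triang (re a * re b) (- (im a * im b))).
  pose proof (Rabs_triang (re a * im b) (im a * re b)).
  rewrite Rabs_Ropp in H. rewrite !Rabs_mult in H, H0.
  unfold Rminus. nra.
Qed.
Lemma cn_RtoC r : cn (RtoC r) = Rabs r.
Proof. unfold cn; simpl; rewrite Rabs_R0; ring. Qed.
Lemma cn_re z : Rabs (re z) <= cn z.
Proof. unfold cn; pose proof (Rabs_pos (im z)); lra. Qed.
Lemma cn_im z : Rabs (im z) <= cn z.
Proof. unfold cn; pose proof (Rabs_pos (re z)); lra. Qed.
Lemma cn_zero : cn CZ = 0.
Proof. unfold cn; simpl; rewrite Rabs_R0; ring. Qed.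

Fixpoint Rsum (f : nat -> R) (k : nat) : R :=
  match k with O => 0 | S k' => Rsum f k' + f k' end.

Lemma Rsum_le f g p : (forall k, (k < p)%nat -> f k <= g k) -> Rsum f p <= Rsum g p.
Proof. induction p; intros H; simpl. lra. pose proof (H p ltac:(lia)). pose proof (IHp ltac:(intros; apply H; lia)). lra. Qed.
Lemma Rsum_pos f p : (forall k, (k < p)%nat -> 0 <= f k) -> 0 <= Rsum f p.
Proof. induction p; intros H; simpl. lra. pose proof (H p ltac:(lia)). pose proof (IHp ltac:(intros; apply H; lia)). lra. Qed.
Lemma Rsum_add f g p : Rsum (fun k => f k + g k) p = Rsum f p + Rsum g p.
Proof. induction p; simpl; [ring|rewrite IHp; ring]. Qed.
Lemma Rsum_mull c f p : Rsum (fun k => c * f k) p = c * Rsum f p.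
Proof. induction p; simpl; [ring|rewrite IHp; ring]. Qed.
Lemma Rsum_swap (f : nat -> nat -> R) p q :
  Rsum (fun k => Rsum (fun l => f k l) q) p = Rsum (fun l => Rsum (fun k => f k l) p) q.
Proof.
  induction p; simpl.
  - induction q; simpl; [auto|rewrite <- IHq; ring].
  - rewrite IHp, <- Rsum_add; auto.
Qed.
Lemma Rsum_ext f g p : (forall k, (k < p)%nat -> f k = g k) -> Rsum f p = Rsum g p.
Proof. induction p; intros H; simpl; auto. rewrite IHp by (intros; apply H; lia). rewrite H by lia; auto. Qed.
Lemma Rsum_ge_term f p k : (forall k, (k < p)%nat -> 0 <= f k) -> (k < p)%nat -> f k <= Rsum f p.
Proof.
  induction p; intros H Hk; [lia|]. simpl.
  assert (0 <= Rsum f p) by (apply Rsum_pos; intros; apply H; lia).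
  destruct (Nat.eq_dec k p). subst; lra.
  pose proof (IHp ltac:(intros; apply H; lia) ltac:(lia)). pose proof (H p ltac:(lia)). lra.
Qed.

Lemma cn_Csum f p : cn (Csum f p) <= Rsum (fun k => cn (f k)) p.
Proof. induction p; simpl. rewrite cn_zero; lra. pose proof (cn_add (Csum f p) (f p)); lra. Qed.

Definition rb (n : nat) (X : Mat) (a : R) : Prop :=
  forall i, (i < n)%nat -> Rsum (fun j => cn (X i j)) n <= a.

Lemma rb_entry n X a i j : rb n X a -> (i < n)%nat -> (j < n)%nat -> cn (X i j) <= a.
Proof.
  intros H Hi Hj. eapply Rle_trans; [|apply (H i Hi)].
  apply (Rsum_ge_term (fun j => cn (X i j))); auto. intros; apply cn_pos.
Qed.

Lemma rb_nonneg n X a : rb n X a -> (0 < n)%nat -> 0 <= a.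
Proof. intros H Hn. eapply Rle_trans; [|apply (H 0%nat Hn)]. apply Rsum_pos; intros; apply cn_pos. Qed.

Lemma rb_mono n X a b : rb n X a -> a <= b -> rb n X b.
Proof. intros H Hab i Hi; specialize (H i Hi); lra. Qed.

Lemma rb_Meq n X Y a : Meq n n X Y -> rb n X a -> rb n Y a.
Proof. intros E H i Hi. rewrite <- (Rsum_ext (fun j => cn (X i j))). apply H; auto. intros; rewrite E; auto. Qed.

Lemma rb_mul n X Y a b : rb n X a -> rb n Y b -> rb n (Mmul n X Y) (a * b).
Proof.
  intros HX HY i Hi.
  destruct n as [|n']; [lia|]. set (n := S n') in *.
  assert (Hb : 0 <= b) by (eapply rb_nonneg; eauto; unfold n; lia).
  eapply Rle_trans.
  { apply Rsum_le with (g := fun j => Rsum (fun k => cn (X i k) * cn (Y k j)) n).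
    intros j Hj. unfold Mmul. eapply Rle_trans; [apply cn_Csum|]. apply Rsum_le. intros; apply cn_mul. }
  rewrite Rsum_swap.
  eapply Rle_trans.
  { apply Rsum_le with (g := fun k => cn (X i k) * b). intros k Hk.
    rewrite Rsum_mull. apply Rmult_le_compat_l. apply cn_pos. apply HY; auto. }
  rewrite (Rsum_ext _ (fun k => b * cn (X i k))) by (intros; ring).
  rewrite Rsum_mull. rewrite Rmult_comm. apply Rmult_le_compat_r; auto.
Qed.

Lemma rb_add n X Y a b : rb n X a -> rb n Y b -> rb n (Madd X Y) (a + b).
Proof.
  intros HX HY i Hi. eapply Rle_trans.
  apply Rsum_le with (g := fun j => cn (X i j) + cn (Y i j)). intros; apply cn_add.
  rewrite Rsum_add. specialize (HX i Hi); specialize (HY i Hi); lra.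
Qed.
Lemma rb_sub n X Y a b : rb n X a -> rb n Y b -> rb n (Msub X Y) (a + b).
Proof.
  intros HX HY i Hi. eapply Rle_trans.
  apply Rsum_le with (g := fun j => cn (X i j) + cn (Y i j)). intros; apply cn_sub.
  rewrite Rsum_add. specialize (HX i Hi); specialize (HY i Hi); lra.
Qed.
Lemma rb_scale n c X a : rb n X a -> rb n (Mscale c X) (cn c * a).
Proof.
  intros HX i Hi. eapply Rle_trans.
  apply Rsum_le with (g := fun j => cn c * cn (X i j)). intros; apply cn_mul.
  rewrite Rsum_mull. apply Rmult_le_compat_l. apply cn_pos. auto.
Qed.
Lemma rb_zero n : rb n (fun _ _ => CZ) 0.
Proof. intros i Hi. rewrite (Rsum_ext _ (fun _ => 0)). clear; induction n; simpl; lra. intros; apply cn_zero. Qed.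
Lemma rb_Mid n : rb n Mid 1.
Proof.
  intros i Hi. unfold Mid.
  induction n; [lia|]. simpl. destruct (Nat.eq_dec i n).
  - subst. rewrite Nat.eqb_refl. rewrite (Rsum_ext _ (fun _ => 0)).
    + clear. unfold cn; simpl. rewrite Rabs_R0, Rabs_R1. induction n; simpl; lra.
    + intros k Hk. destruct (Nat.eqb_spec n k); [lia|]. apply cn_zero.
  - destruct (Nat.eqb_spec i n); [lia|]. rewrite cn_zero. specialize (IHn ltac:(lia)). lra.
Qed.
Lemma rb_exists n X : exists a, rb n X a.
Proof.
  exists (Rsum (fun i => Rsum (fun j => cn (X i j)) n) n). intros i Hi.
  apply (Rsum_ge_term (fun i => Rsum (fun j => cn (X i j)) n)); auto.
  intros; apply Rsum_pos; intros; apply cn_pos.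
Qed.

Lemma rb_pow n A a k : rb n A a -> 0 <= a -> rb n (Mpow n A k) (a ^ k).
Proof.
  intros H Ha. induction k; simpl. apply rb_Mid.
  rewrite Rmult_comm. apply rb_mul; auto.
Qed.

Lemma Ccv_unique s l1 l2 : Ccv s l1 -> Ccv s l2 -> l1 = l2.
Proof. intros [H1 H2] [H3 H4]. apply Ceq; eapply UL_sequence; eauto. Qed.

Lemma Ccv_add s t a b : Ccv s a -> Ccv t b -> Ccv (fun N => Cadd (s N) (t N)) (Cadd a b).
Proof. intros [H1 H2] [H3 H4]; split; simpl; apply CV_plus; auto. Qed.
Lemma Ccv_opp s a : Ccv s a -> Ccv (fun N => Copp (s N)) (Copp a).
Proof. intros [H1 H2]; split; simpl; apply (CV_opp _ _ H1) || apply (CV_opp _ _ H2). Qed.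
Lemma Ccv_const c : Ccv (fun _ => c) c.
Proof. split; intros e He; exists O; intros; unfold Rdist; rewrite Rminus_diag, Rabs_R0; auto. Qed.
Lemma Ccv_mul s t a b : Ccv s a -> Ccv t b -> Ccv (fun N => Cmul (s N) (t N)) (Cmul a b).
Proof.
  intros [H1 H2] [H3 H4]; split; simpl.
  - apply CV_minus; apply CV_mult; auto.
  - apply CV_plus; apply CV_mult; auto.
Qed.
Lemma Ccv_sum (s : nat -> nat -> Cplx) (l : nat -> Cplx) p :
  (forall k, (k < p)%nat -> Ccv (fun N => s N k) (l k)) -> Ccv (fun N => Csum (s N) p) (Csum l p).
Proof.
  induction p; intros H; simpl. apply Ccv_const.
  apply Ccv_add; auto.
Qed.
Lemma Ccv_ext s t l : (forall N, s N = t N) -> Ccv s l -> Ccv t l.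
Proof. intros E H. replace t with s by (apply functional_extensionality; auto). auto. Qed.
Lemma Ccv_shift s l : Ccv s l -> Ccv (fun N => s (S N)) l.
Proof.
  intros [H1 H2]; split; intros e He; [destruct (H1 e He) as [N HN]|destruct (H2 e He) as [N HN]];
  exists N; intros k Hk; apply HN; lia.
Qed.

Lemma Ccv_bound s l c r : Ccv s l -> (forall N, cn (Cadd (s N) (Copp c)) <= r) -> cn (Cadd l (Copp c)) <= r.
Proof.
  intros [H1 H2] Hb. unfold cn; simpl.
  apply Rle_cv_lim with (Un := fun N => Rabs (re (s N) + - re c) + Rabs (im (s N) + - im c)) (Vn := fun _ => r).
  - intros N; apply (Hb N).
  - apply CV_plus; apply cv_cvabs; apply CV_plus; auto; intros e He; exists O; intros;
    unfold Rdist; rewrite Rminus_diag, Rabs_R0; auto.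
  - intros e He; exists O; intros; unfold Rdist; rewrite Rminus_diag, Rabs_R0; auto.
Qed.

Lemma sum_f_R0_Csum_re (a : nat -> Cplx) N : re (Csum a (S N)) = sum_f_R0 (fun k => re (a k)) N.
Proof. induction N as [|N IH]; [simpl; ring|]. change (Csum a (S (S N))) with (Cadd (Csum a (S N)) (a (S N))). simpl sum_f_R0. rewrite <- IH. reflexivity. Qed.
Lemma sum_f_R0_Csum_im (a : nat -> Cplx) N : im (Csum a (S N)) = sum_f_R0 (fun k => im (a k)) N.
Proof. induction N as [|N IH]; [simpl; ring|]. change (Csum a (S (S N))) with (Cadd (Csum a (S N)) (a (S N))). simpl sum_f_R0. rewrite <- IH. reflexivity. Qed.

Lemma real_series_cv (a b : nat -> R) lb : (forall k, Rabs (a k) <= b k) -> Un_cv (sum_f_R0 b) lb ->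
  exists l, Un_cv (sum_f_R0 a) l.
Proof.
  intros Hab Hb.
  assert (Habs : {l | Un_cv (fun N => sum_f_R0 (fun k => Rabs (a k)) N) l}).
  { apply Rseries_CV_comp with b. intros k; split; [apply Rabs_pos|auto]. exists lb; auto. }
  apply cv_cauchy_1 in Habs. apply cauchy_abs in Habs. apply cv_cauchy_2 in Habs.
  destruct Habs as [l Hl]; exists l; auto.
Qed.

Lemma cseries_cv (a : nat -> Cplx) (b : nat -> R) lb : (forall k, cn (a k) <= b k) -> Un_cv (sum_f_R0 b) lb ->
  exists l, Ccv (fun N => Csum a (S N)) l.
Proof.
  intros Hab Hb.
  destruct (real_series_cv (fun k => re (a k)) b lb) as [l1 H1]; auto.
  { intros; eapply Rle_trans; [apply cn_re|auto]. }
  destruct (real_series_cv (fun k => im (a k)) b lb) as [l2 H2]; auto.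
  { intros; eapply Rle_trans; [apply cn_im|auto]. }
  exists (mkCplx l1 l2). split; simpl.
  - eapply Un_cv_ext; [|exact H1]. intros; symmetry; apply sum_f_R0_Csum_re.
  - eapply Un_cv_ext; [|exact H2]. intros; symmetry; apply sum_f_R0_Csum_im.
Qed.

Lemma exp_series a : Un_cv (sum_f_R0 (fun k => / INR (fact k) * a ^ k)) (exp a).
Proof. unfold exp. destruct (exist_exp a) as [l Hl]. simpl. exact Hl. Qed.

Lemma psum_le_lim (b : nat -> R) lb N : (forall k, 0 <= b k) -> Un_cv (sum_f_R0 b) lb -> sum_f_R0 b N <= lb.
Proof.
  intros Hb Hl.
  apply Rle_cv_lim with (Un := fun _ => sum_f_R0 b N) (Vn := fun M => sum_f_R0 b (N + M)).
  - intros M. induction M. rewrite Nat.add_0_r; lra.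
    replace (N + S M)%nat with (S (N + M)) by lia. simpl. specialize (Hb (S (N + M))). lra.
  - intros e He; exists O; intros; unfold Rdist; rewrite Rminus_diag, Rabs_R0; auto.
  - intros e He. destruct (Hl e He) as [K HK]. exists K. intros k Hk. apply HK. lia.
Qed.

Lemma exp_psum_le a N : 0 <= a -> sum_f_R0 (fun k => / INR (fact k) * a ^ k) N <= exp a.
Proof.
  intros Ha. apply psum_le_lim; [|apply exp_series]. intros k.
  apply Rmult_le_pos. left; apply Rinv_0_lt_compat, INR_fact_lt_0. apply pow_le; auto.
Qed.

Lemma Rsum_sum_f (f : nat -> R) N : Rsum f (S N) = sum_f_R0 f N.
Proof. induction N; simpl; [ring|]. simpl in IHN. rewrite <- IHN. auto. Qed.

Lemma Mseries_cv n (t : nat -> Mat) (b : nat -> R) lb :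
  (forall k i j, (i < n)%nat -> (j < n)%nat -> cn (t k i j) <= b k) -> Un_cv (sum_f_R0 b) lb ->
  exists L : Mat, forall i j, (i < n)%nat -> (j < n)%nat -> Ccv (fun N => Csum (fun k => t k i j) (S N)) (L i j).
Proof.
  intros Hb Hl.
  exists (fun i j => epsilon (inhabits CZ) (fun l => Ccv (fun N => Csum (fun k => t k i j) (S N)) l)).
  intros i j Hi Hj. apply epsilon_spec. eapply cseries_cv; eauto.
Qed.

Definition fct k := / INR (fact k).
Lemma fct_pos k : 0 < fct k.
Proof. apply Rinv_0_lt_compat, INR_fact_lt_0. Qed.
Lemma cn_fct k : cn (RtoC (fct k)) = fct k.
Proof. rewrite cn_RtoC. apply Rabs_right. left; apply fct_pos. Qed.

Lemma Mexp_spec n A : forall i j, (i < n)%nat -> (j < n)%nat ->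
  Ccv (fun N => Mexp_partial n A N i j) (Mexp n A i j).
Proof.
  destruct (rb_exists n A) as [a0 Ha0].
  set (a := Rabs a0). assert (Ha : rb n A a) by (apply rb_mono with a0; auto; apply RRle_abs).
  assert (Ha' : 0 <= a) by apply Rabs_pos.
  unfold Mexp. apply epsilon_spec.
  apply (Mseries_cv n (fun k => Mscale (RtoC (fct k)) (Mpow n A k)) (fun k => fct k * a ^ k) (exp a)).
  - intros k i j Hi Hj. unfold Mscale. eapply Rle_trans; [apply cn_mul|].
    rewrite cn_fct. apply Rmult_le_compat_l. left; apply fct_pos.
    apply rb_entry with n; auto. apply rb_pow; auto.
  - apply exp_series.
Qed.

Section Est.
Variables (n : nat) (A H : Mat).

Definition Ek k := Msub (Mpow n (Madd A H) k) (Mpow n A k).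
Definition Tk k := match k with O => (fun _ _ => CZ) | S k' => Mscale (RtoC (INR k)) (Mpow n A k') end.
Definition Dk k := Msub (Ek k) (Mmul n H (Tk k)).


Lemma Ek_0 : Ek 0 = (fun _ _ => CZ).
Proof. unfold Ek; simpl; mext; unfold Msub; ring. Qed.

Lemma Ek_S k : Ek (S k) = Madd (Mmul n (Ek k) (Madd A H)) (Mmul n (Mpow n A k) H).
Proof.
  unfold Ek; simpl. rewrite Mmul_subl, !Mmul_addr. mext. unfold Msub, Madd; ring.
Qed.

Lemma Tk_S k : Tk (S k) = Madd (Mmul n (Tk k) A) (Mpow n A k).
Proof.
  destruct k; simpl.
  - mext. unfold Madd, Mscale, Mmul. rewrite (Csum_ext _ (fun _ => CZ)), Csum_zero.
    apply Ceq; simpl; ring. intros; ring.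
  - rewrite Mmul_scalel. mext. unfold Madd, Mscale. apply Ceq; simpl; rewrite ?S_INR; simpl; ring.
Qed.

Hypothesis HAH : Meq n n (Mmul n H A) (Mmul n A H).

Lemma pow_comm k : Meq n n (Mmul n H (Mpow n A k)) (Mmul n (Mpow n A k) H).
Proof.
  induction k; simpl.
  - intros i j Hi Hj. rewrite Mid_l, Mid_r; auto.
  - eapply Meq_trans. rewrite <- Mmul_assoc. apply Meq_mull. apply IHk.
    rewrite Mmul_assoc. eapply Meq_trans. apply Meq_mulr. apply HAH.
    rewrite <- Mmul_assoc. apply Meq_refl.
Qed.

Lemma Dk_S k : Meq n n (Dk (S k)) (Madd (Mmul n (Dk k) (Madd A H)) (Mmul n (Mmul n H (Tk k)) H)).
Proof.
  unfold Dk at 1. rewrite Ek_S, Tk_S.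
  assert (E : Msub (Madd (Mmul n (Ek k) (Madd A H)) (Mmul n (Mpow n A k) H)) (Mmul n H (Madd (Mmul n (Tk k) A) (Mpow n A k)))
     = Madd (Madd (Mmul n (Dk k) (Madd A H)) (Mmul n (Mmul n H (Tk k)) H))
            (Msub (Mmul n (Mpow n A k) H) (Mmul n H (Mpow n A k)))).
  { unfold Dk. rewrite !Mmul_subl, !Mmul_addr, !Mmul_assoc. mext. unfold Msub, Madd; ring. }
  rewrite E. intros i j Hi Hj. unfold Madd, Msub. rewrite (pow_comm k i j Hi Hj). ring.
Qed.

Variables (a h : R).
Hypothesis Ha : rb n A a.
Hypothesis Hh : rb n H h.
Hypothesis Ha0 : 0 <= a.
Hypothesis Hh0 : 0 <= h.
Hypothesis Hh1 : h <= 1.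

Lemma pow_facts k : 1 <= (a + 1) ^ k /\ a ^ k <= (a + 1) ^ k.
Proof.
  split. apply pow_R1_Rle; lra. apply pow_incr; lra.
Qed.

Lemma Ek_bound k : rb n (Ek k) (INR k * h * (a + 1) ^ k).
Proof.
  induction k.
  - rewrite Ek_0. simpl. replace (0 * h * 1) with 0 by ring. apply rb_zero.
  - rewrite Ek_S. eapply rb_mono.
    + apply rb_add. apply rb_mul. apply IHk. apply rb_add. apply Ha. apply Hh. apply rb_mul. apply rb_pow; [apply Ha|apply Ha0]. apply Hh.
    + destruct (pow_facts k) as [P1 P2]. rewrite S_INR. simpl.
      set (P := (a + 1) ^ k) in *. assert (0 <= INR k) by apply pos_INR.
      assert (0 <= a ^ k) by (apply pow_le; auto).
      assert (INR k * h * P * (a + h) <= INR k * h * P * (a + 1)).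
      { apply Rmult_le_compat_l. repeat apply Rmult_le_pos; lra. lra. }
      assert (a ^ k <= P * (a + 1)) by nra. assert (a ^ k * h <= P * (a + 1) * h) by (apply Rmult_le_compat_r; lra).
      nra.
Qed.

Lemma Tk_bound k : rb n (Tk k) (INR k * (a + 1) ^ k).
Proof.
  destruct k.
  - simpl. replace (0 * 1) with 0 by ring. apply rb_zero.
  - unfold Tk. eapply rb_mono. apply rb_scale. apply rb_pow. apply Ha. apply Ha0.
    rewrite cn_RtoC. rewrite Rabs_right by (apply Rle_ge, pos_INR).
    destruct (pow_facts k) as [P1 P2]. assert (0 <= INR (S k)) by apply pos_INR.
    apply Rmult_le_compat_l; auto. simpl. nra.
Qed.

Lemma Dk_bound k : rb n (Dk k) (h * h * (INR k * INR k) * (a + 1) ^ k).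
Proof.
  induction k.
  - unfold Dk. rewrite Ek_0. simpl. eapply rb_mono. eapply rb_Meq; [|apply rb_zero].
    intros i j _ _. unfold Msub, Mmul. rewrite (Csum_ext _ (fun _ => CZ)), Csum_zero. ring. intros; ring.
    lra.
  - eapply rb_Meq. apply Meq_sym, Dk_S. eapply rb_mono.
    + apply rb_add. apply rb_mul. apply IHk. apply rb_add. apply Ha. apply Hh. apply rb_mul. apply rb_mul. apply Hh. apply Tk_bound. apply Hh.
    + destruct (pow_facts k) as [P1 P2]. rewrite S_INR. simpl.
      set (P := (a + 1) ^ k) in *. assert (0 <= INR k) by apply pos_INR.
      assert (h * h * (INR k * INR k) * P * (a + h) <= h * h * (INR k * INR k) * P * (a + 1)).
      { apply Rmult_le_compat_l. repeat apply Rmult_le_pos; try lra; nra. lra. }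
      assert (h * (INR k * P) * h <= h * h * INR k * P * (a + 1)).
      { assert (0 <= h * h * INR k * P) by (repeat apply Rmult_le_pos; lra).
        nra. }
      assert (0 <= h * h * P * (a + 1)) by (repeat apply Rmult_le_pos; lra).
      nra.
Qed.
End Est.

Lemma Csum_shift f p : Csum f (S p) = Cadd (f O) (Csum (fun k => f (S k)) p).
Proof. induction p; simpl in *. ring. rewrite IHp. ring. Qed.

Lemma INR_le_pow2 k : INR k <= 2 ^ k.
Proof. induction k. simpl; lra. rewrite S_INR. simpl. assert (1 <= 2 ^ k) by (apply pow_R1_Rle; lra). lra. Qed.

Lemma fct_S k : fct (S k) * INR (S k) = fct k.
Proof.
  unfold fct. rewrite fact_simpl, mult_INR. field. split. apply INR_fact_neq_0. apply not_0_INR; lia.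
Qed.

Lemma Cadd_0_l x : Cadd CZ x = x.
Proof. ring. Qed.

Section Lim.
Variables (n : nat) (A H : Mat).

Lemma PS1 N i j : Cadd (Mexp_partial n (Madd A H) N i j) (Copp (Mexp_partial n A N i j)) =
  Csum (fun k => Cmul (RtoC (fct k)) (Ek n A H k i j)) (S N).
Proof.
  unfold Mexp_partial. rewrite <- Csum_opp, <- Csum_add. apply Csum_ext. intros. unfold Ek, Msub, fct. ring.
Qed.

Lemma PS2 N i j : Cadd (Cadd (Mexp_partial n (Madd A H) (S N) i j) (Copp (Mexp_partial n A (S N) i j)))
      (Copp (Mmul n H (Mexp_partial n A N) i j)) =
  Csum (fun k => Cmul (RtoC (fct k)) (Dk n A H k i j)) (S (S N)).
Proof.
  unfold Dk, Msub. rewrite (Csum_ext _ (fun k => Cadd (Cmul (RtoC (fct k)) (Ek n A H k i j))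
                                               (Copp (Cmul (RtoC (fct k)) (Mmul n H (Tk n A k) i j))))) by (intros; ring).
  rewrite Csum_add, Csum_opp. rewrite <- PS1. f_equal. f_equal.
  rewrite Csum_shift. simpl Tk at 1.
  assert (Z0 : Mmul n H (fun _ _ => CZ) i j = CZ) by (unfold Mmul; rewrite (Csum_ext _ (fun _ => CZ)) by (intros; ring); apply Csum_zero). rewrite Z0.
  rewrite (Csum_ext _ (fun k => Cmul (RtoC (fct k)) (Mmul n H (Mpow n A k) i j))).
  2:{ intros k _. unfold Tk. rewrite Mmul_scaler. unfold Mscale.
      rewrite <- (fct_S k). apply Ceq; simpl; ring. }
  unfold Mmul, Mexp_partial. rewrite (Csum_ext (fun k => Cmul (H i k) _)
        (fun k => Csum (fun l => Cmul (RtoC (fct l)) (Cmul (H i k) (Mpow n A l k j))) (S N))).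
  2:{ intros k _. rewrite <- Csum_mull. apply Csum_ext; intros; unfold fct; ring. }
  rewrite Csum_swap. replace (Cmul (RtoC (fct 0)) CZ) with CZ by ring. rewrite Cadd_0_l. apply Csum_ext. intros l _. rewrite <- Csum_mull. auto.
Qed.

Variables (a h : R).
Hypothesis Ha : rb n A a.
Hypothesis Hh : rb n H h.
Hypothesis Ha0 : 0 <= a.
Hypothesis Hh0 : 0 <= h.
Hypothesis Hh1 : h <= 1.

Lemma Cadd_opp0 x : Cadd x (Copp CZ) = x.
Proof. ring. Qed.

Lemma exp_cont_bound i j : (i < n)%nat -> (j < n)%nat ->
  cn (Cadd (Mexp n (Madd A H) i j) (Copp (Mexp n A i j))) <= h * exp (2 * (a + 1)).
Proof.
  intros Hi Hj. rewrite <- (Cadd_opp0 (Cadd _ _)).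
  apply (Ccv_bound (fun N => Cadd (Mexp_partial n (Madd A H) N i j) (Copp (Mexp_partial n A N i j)))).
  - apply Ccv_add. apply Mexp_spec; auto. apply Ccv_opp. apply Mexp_spec; auto.
  - intros N. rewrite Cadd_opp0, PS1. eapply Rle_trans. apply cn_Csum.
    eapply Rle_trans. apply Rsum_le with (g := fun k => h * (fct k * (2 * (a + 1)) ^ k)).
    + intros k _. eapply Rle_trans. apply cn_mul. rewrite cn_fct.
      pose proof (rb_entry _ _ _ i j (Ek_bound n A H a h Ha Hh Ha0 Hh0 Hh1 k) Hi Hj).
      pose proof (fct_pos k). rewrite Rpow_mult_distr.
      pose proof (INR_le_pow2 k). pose proof (pow_le (a+1) k ltac:(lra)).
      assert (INR k * h * (a + 1) ^ k <= h * (2 ^ k * (a + 1) ^ k)).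
      { replace (INR k * h * (a + 1) ^ k) with (h * (INR k * (a + 1) ^ k)) by ring.
        apply Rmult_le_compat_l; auto. apply Rmult_le_compat_r; auto. }
      apply Rle_trans with (fct k * (h * (2 ^ k * (a + 1) ^ k))).
      apply Rmult_le_compat_l; lra. right; ring.
    + rewrite Rsum_mull. apply Rmult_le_compat_l; auto. rewrite Rsum_sum_f.
      apply exp_psum_le. lra.
Qed.

Hypothesis HAH : Meq n n (Mmul n H A) (Mmul n A H).

Lemma exp_deriv_bound i j : (i < n)%nat -> (j < n)%nat ->
  cn (Cadd (Cadd (Mexp n (Madd A H) i j) (Copp (Mexp n A i j))) (Copp (Mmul n H (Mexp n A) i j)))
   <= h * h * exp (4 * (a + 1)).
Proof.
  intros Hi Hj. rewrite <- (Cadd_opp0 (Cadd _ _)).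
  apply (Ccv_bound (fun N => Cadd (Cadd (Mexp_partial n (Madd A H) (S N) i j) (Copp (Mexp_partial n A (S N) i j)))
      (Copp (Mmul n H (Mexp_partial n A N) i j)))).
  - apply Ccv_add. apply Ccv_add. apply (Ccv_shift (fun N => Mexp_partial n (Madd A H) N i j)). apply Mexp_spec; auto.
    apply Ccv_opp. apply (Ccv_shift (fun N => Mexp_partial n A N i j)). apply Mexp_spec; auto.
    apply Ccv_opp. unfold Mmul. apply (Ccv_sum (fun N k => Cmul (H i k) (Mexp_partial n A N k j))).
    intros k Hk. apply Ccv_mul. apply Ccv_const. apply Mexp_spec; auto.
  - intros N. rewrite Cadd_opp0, PS2. eapply Rle_trans. apply cn_Csum.
    eapply Rle_trans. apply Rsum_le with (g := fun k => h * h * (fct k * (4 * (a + 1)) ^ k)).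
    + intros k _. eapply Rle_trans. apply cn_mul. rewrite cn_fct.
      pose proof (rb_entry _ _ _ i j (Dk_bound n A H HAH a h Ha Hh Ha0 Hh0 Hh1 k) Hi Hj).
      pose proof (fct_pos k). replace 4 with (2 * 2) by ring. rewrite !Rpow_mult_distr.
      pose proof (INR_le_pow2 k). pose proof (pow_le (a+1) k ltac:(lra)). pose proof (pos_INR k).
      assert (INR k * INR k <= 2 ^ k * 2 ^ k) by nra.
      assert (h * h * (INR k * INR k) * (a + 1) ^ k <= h * h * (2 ^ k * 2 ^ k * (a + 1) ^ k)).
      { replace (h * h * (INR k * INR k) * (a + 1) ^ k) with (h * h * ((INR k * INR k) * (a + 1) ^ k)) by ring. apply Rmult_le_compat_l. nra. apply Rmult_le_compat_r; auto. }
      apply Rle_trans with (fct k * (h * h * (2 ^ k * 2 ^ k * (a + 1) ^ k))).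
      apply Rmult_le_compat_l; lra. right; ring.
    + rewrite Rsum_mull. apply Rmult_le_compat_l; [nra|]. rewrite Rsum_sum_f.
      apply exp_psum_le. lra.
Qed.
End Lim.


Definition comm n X Y := Meq n n (Mmul n X Y) (Mmul n Y X).

Lemma comm_sym n X Y : comm n X Y -> comm n Y X.
Proof. unfold comm; intros; apply Meq_sym; auto. Qed.
Lemma comm_addr n X Y Z : comm n X Y -> comm n X Z -> comm n X (Madd Y Z).
Proof. unfold comm; intros H1 H2. rewrite Mmul_addr, Mmul_addl. apply Meq_add; auto. Qed.
Lemma comm_scaler n c X Y : comm n X Y -> comm n X (Mscale c Y).
Proof. unfold comm; intros H1. rewrite Mmul_scaler, Mmul_scalel. apply Meq_scale; auto. Qed.
Lemma comm_refl n X : comm n X X.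
Proof. apply Meq_refl. Qed.
Lemma comm_mull n X Y Z : comm n X Z -> comm n Y Z -> comm n (Mmul n X Y) Z.
Proof.
  unfold comm; intros H1 H2. rewrite Mmul_assoc. eapply Meq_trans. apply Meq_mulr, H2.
  rewrite <- Mmul_assoc. eapply Meq_trans. apply Meq_mull, H1. rewrite Mmul_assoc. apply Meq_refl.
Qed.
Lemma comm_pow n X k : comm n X (Mpow n X k).
Proof. unfold comm. apply (pow_comm n X X (Meq_refl _ _ _)). Qed.

Lemma Mmul_partial_l n C A N i j :
  Mmul n C (Mexp_partial n A N) i j =
  Csum (fun l => Cmul (RtoC (/ INR (fact l))) (Mmul n C (Mpow n A l) i j)) (S N).
Proof.
  unfold Mmul at 1. unfold Mexp_partial.
  transitivity (Csum (fun k => Csum (fun l => Cmul (RtoC (/ INR (fact l))) (Cmul (C i k) (Mpow n A l k j))) (S N)) n).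
  - apply Csum_ext; intros. rewrite <- Csum_mull; apply Csum_ext; intros; ring.
  - rewrite Csum_swap. apply Csum_ext; intros. unfold Mmul. rewrite <- Csum_mull. reflexivity.
Qed.
Lemma Mmul_partial_r n C A N i j :
  Mmul n (Mexp_partial n A N) C i j =
  Csum (fun l => Cmul (RtoC (/ INR (fact l))) (Mmul n (Mpow n A l) C i j)) (S N).
Proof.
  unfold Mmul at 1. unfold Mexp_partial.
  transitivity (Csum (fun k => Csum (fun l => Cmul (RtoC (/ INR (fact l))) (Cmul (Mpow n A l i k) (C k j))) (S N)) n).
  - apply Csum_ext; intros. rewrite <- Csum_mulr; apply Csum_ext; intros; ring.
  - rewrite Csum_swap. apply Csum_ext; intros. unfold Mmul. rewrite <- Csum_mull. reflexivity.
Qed.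

Lemma comm_exp n C A : comm n C A -> comm n C (Mexp n A).
Proof.
  intros HC i j Hi Hj.
  apply (Ccv_unique (fun N => Mmul n C (Mexp_partial n A N) i j)).
  - unfold Mmul at 1. apply (Ccv_sum (fun N k => Cmul (C i k) (Mexp_partial n A N k j))).
    intros k Hk. apply Ccv_mul. apply Ccv_const. apply Mexp_spec; auto.
  - apply Ccv_ext with (s := fun N => Mmul n (Mexp_partial n A N) C i j).
    + intros N. rewrite Mmul_partial_l, Mmul_partial_r. apply Csum_ext. intros l _.
      f_equal. symmetry. apply (pow_comm n A C HC l i j Hi Hj).
    + unfold Mmul at 1. apply (Ccv_sum (fun N k => Cmul (Mexp_partial n A N i k) (C k j))).
      intros k Hk. apply Ccv_mul. apply Mexp_spec; auto. apply Ccv_const.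
Qed.

Lemma cder_from_bound (g : R -> Cplx) z l C d0 : 0 <= C -> 0 < d0 ->
  (forall h, h <> 0 -> Rabs h < d0 -> cn (Cadd (Cadd (g (z + h)) (Copp (g z))) (Copp (Cmul (RtoC h) l))) <= C * (h * h)) ->
  cder g z l.
Proof.
  intros HC Hd Hb.
  assert (Key : forall (f : R -> R) (lf : R),
     (forall h, h <> 0 -> Rabs h < d0 -> Rabs (f (z + h) - f z - h * lf) <= C * (h * h)) ->
     derivable_pt_lim f z lf).
  { intros f lf Hf e He.
    assert (Hpos : 0 < Rmin d0 (e / (C + 1))).
    { apply Rmin_pos; auto. apply Rdiv_lt_0_compat; lra. }
    exists (mkposreal _ Hpos). simpl. intros h Hh0 Hh.
    pose proof (Rmin_l d0 (e / (C + 1))). pose proof (Rmin_r d0 (e / (C + 1))).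
    specialize (Hf h Hh0 ltac:(lra)).
    assert (Hah : 0 < Rabs h) by (apply Rabs_pos_lt; auto).
    replace ((f (z + h) - f z) / h - lf) with ((f (z + h) - f z - h * lf) / h) by (field; auto).
    unfold Rdiv. rewrite Rabs_mult, Rabs_inv.
    apply Rle_lt_trans with (C * (h * h) * / Rabs h).
    { apply Rmult_le_compat_r; auto. left; apply Rinv_0_lt_compat; auto. }
    replace (C * (h * h) * / Rabs h) with (C * Rabs h).
    2:{ assert (Hhh : h * h = Rabs h * Rabs h) by (rewrite <- Rabs_mult; symmetry; apply Rabs_pos_eq; apply Rle_0_sqr).
        rewrite Hhh. field. lra. }
    assert (Rabs h < e / (C + 1)) by lra.
    assert (C * Rabs h <= (C + 1) * Rabs h) by nra.
    assert ((C + 1) * Rabs h < (C + 1) * (e / (C + 1))) by (apply Rmult_lt_compat_l; lra).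
    replace ((C + 1) * (e / (C + 1))) with e in * by (field; lra). lra. }
  split.
  - apply Key. intros h H1 H2. eapply Rle_trans; [|apply (Hb h H1 H2)].
    eapply Rle_trans; [|apply cn_re]. simpl. right. f_equal. ring.
  - apply Key. intros h H1 H2. eapply Rle_trans; [|apply (Hb h H1 H2)].
    eapply Rle_trans; [|apply cn_im]. simpl. right. f_equal. ring.
Qed.

Lemma exp_dir_deriv n (Af : R -> Mat) (P : Mat) z :
  (forall h, Af (z + h) = Madd (Af z) (Mscale (RtoC h) P)) ->
  comm n P (Af z) ->
  hasD n n (fun y => Mexp n (Af y)) z (Mmul n P (Mexp n (Af z))).
Proof.
  intros HA Hc i j Hi Hj.
  destruct (rb_exists n (Af z)) as [a0 Ha0]. set (a := Rabs a0).
  assert (Ha : rb n (Af z) a) by (apply rb_mono with a0; auto; apply RRle_abs).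
  destruct (rb_exists n P) as [p0 Hp0]. set (p := Rabs p0).
  assert (Hp : rb n P p) by (apply rb_mono with p0; auto; apply RRle_abs).
  assert (Ha' : 0 <= a) by apply Rabs_pos. assert (Hp' : 0 <= p) by apply Rabs_pos.
  apply cder_from_bound with (C := p * p * exp (4 * (a + 1))) (d0 := / (p + 1)).
  - pose proof (exp_pos (4 * (a + 1))). apply Rmult_le_pos; [nra|lra].
  - apply Rinv_0_lt_compat; lra.
  - intros h Hh0 Hh. rewrite HA.
    assert (Hr : rb n (Mscale (RtoC h) P) (Rabs h * p)).
    { rewrite <- cn_RtoC. apply rb_scale; auto. }
    assert (Hhp : Rabs h * p <= 1).
    { assert (Rabs h * (p + 1) <= 1).
      { apply Rmult_le_reg_r with (/ (p + 1)). apply Rinv_0_lt_compat; lra.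
        rewrite Rmult_assoc, Rinv_r, Rmult_1_l, Rmult_1_r by lra. lra. }
      pose proof (Rabs_pos h). nra. }
    assert (Hcm : comm n (Mscale (RtoC h) P) (Af z)).
    { apply comm_sym. apply comm_scaler. apply comm_sym; auto. }
    pose proof (exp_deriv_bound n (Af z) (Mscale (RtoC h) P) a (Rabs h * p) Ha Hr Ha'
                  ltac:(pose proof (Rabs_pos h); nra) Hhp Hcm i j Hi Hj) as B.
    rewrite Mmul_scalel in B. unfold Mscale at 2 in B.
    eapply Rle_trans; [apply B|].
    replace (Rabs h * p * (Rabs h * p)) with (p * p * (Rabs h * Rabs h)) by ring.
    rewrite <- Rabs_mult. rewrite Rabs_right by (apply Rle_ge; nra). right; ring.
Qed.

Section XiFacts.
Variables (n : nat) (S : Mat).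
Definition S3 := Mpow n S 3.
Definition Aof x t := Madd (Mscale (RtoC (-2 * x)) S) (Mscale (RtoC (-2 * t)) S3).
Definition Pm := Mscale (RtoC (-2)) S.
Definition Qm := Mscale (RtoC (-2)) S3.

Lemma Aof_x x t h : Aof (x + h) t = Madd (Aof x t) (Mscale (RtoC h) Pm).
Proof. unfold Aof, Pm; mext; unfold Madd, Mscale; apply Ceq; simpl; ring. Qed.
Lemma Aof_t x t h : Aof x (t + h) = Madd (Aof x t) (Mscale (RtoC h) Qm).
Proof. unfold Aof, Qm; mext; unfold Madd, Mscale; apply Ceq; simpl; ring. Qed.
Lemma Aof_xt x t x' t' : Aof x' t' = Madd (Aof x t) (Madd (Mscale (RtoC (x' - x)) Pm) (Mscale (RtoC (t' - t)) Qm)).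
Proof. unfold Aof, Pm, Qm; mext; unfold Madd, Mscale; apply Ceq; simpl; ring. Qed.

Lemma comm_S_S3 : comm n S S3.
Proof. apply comm_pow. Qed.
Lemma comm_S_Aof x t : comm n S (Aof x t).
Proof. unfold Aof. apply comm_addr; apply comm_scaler. apply comm_refl. apply comm_S_S3. Qed.
Lemma comm_S_Xi x t : comm n S (Xi n S x t).
Proof. unfold Xi. apply comm_exp. apply comm_S_Aof. Qed.
Lemma comm_S3_Aof x t : comm n S3 (Aof x t).
Proof. unfold Aof. apply comm_addr; apply comm_scaler. apply comm_sym, comm_S_S3. apply comm_refl. Qed.

Lemma Xi_dx x t : hasD n n (fun y => Xi n S y t) x (Mmul n Pm (Xi n S x t)).
Proof.
  apply (exp_dir_deriv n (fun y => Aof y t) Pm x).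
  - intros; apply Aof_x.
  - unfold Pm. apply comm_sym. apply comm_scaler. apply comm_sym. apply comm_S_Aof.
Qed.
Lemma Xi_dt x t : hasD n n (fun s => Xi n S x s) t (Mmul n Qm (Xi n S x t)).
Proof.
  apply (exp_dir_deriv n (fun s => Aof x s) Qm t).
  - intros; apply Aof_t.
  - unfold Qm. apply comm_sym. apply comm_scaler. apply comm_sym. apply comm_S3_Aof.
Qed.

Lemma Xi_cont x t : forall e, 0 < e -> exists d, 0 < d /\ forall x' t', Rabs (x' - x) < d -> Rabs (t' - t) < d ->
  forall i j, (i < n)%nat -> (j < n)%nat -> cn (Cadd (Xi n S x' t' i j) (Copp (Xi n S x t i j))) < e.
Proof.
  intros e He.
  destruct (rb_exists n (Aof x t)) as [a0 Ha0]. set (a := Rabs a0).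
  assert (Ha : rb n (Aof x t) a) by (apply rb_mono with a0; auto; apply RRle_abs).
  destruct (rb_exists n Pm) as [p0 Hp0]. set (p := Rabs p0).
  assert (Hp : rb n Pm p) by (apply rb_mono with p0; auto; apply RRle_abs).
  destruct (rb_exists n Qm) as [q0 Hq0]. set (q := Rabs q0).
  assert (Hq : rb n Qm q) by (apply rb_mono with q0; auto; apply RRle_abs).
  assert (Ha' : 0 <= a) by apply Rabs_pos. assert (Hp' : 0 <= p) by apply Rabs_pos.
  assert (Hq' : 0 <= q) by apply Rabs_pos.
  set (E := exp (2 * (a + 1))). assert (HE : 0 < E) by apply exp_pos.
  set (d := Rmin (/ (p + q + 1)) (e / (2 * ((p + q + 1) * E)))).
  assert (Hd : 0 < d).
  { apply Rmin_pos. apply Rinv_0_lt_compat; lra. apply Rdiv_lt_0_compat; auto. apply Rmult_lt_0_compat; [lra|]. apply Rmult_lt_0_compat; lra. }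
  exists d; split; auto. intros x' t' Hx Ht i j Hi Hj.
  pose proof (Rmin_l (/ (p + q + 1)) (e / (2 * ((p + q + 1) * E)))).
  pose proof (Rmin_r (/ (p + q + 1)) (e / (2 * ((p + q + 1) * E)))).
  fold d in H, H0.
  set (h := Rabs (x' - x) * p + Rabs (t' - t) * q).
  assert (Hh : rb n (Madd (Mscale (RtoC (x' - x)) Pm) (Mscale (RtoC (t' - t)) Qm)) h).
  { unfold h. apply rb_add; rewrite <- cn_RtoC; apply rb_scale; auto. }
  assert (Hh0 : 0 <= h) by (unfold h; pose proof (Rabs_pos (x' - x)); pose proof (Rabs_pos (t' - t)); nra).
  assert (Hhd : h <= d * (p + q + 1)).
  { unfold h. pose proof (Rabs_pos (x' - x)); pose proof (Rabs_pos (t' - t)). nra. }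
  assert (Hd1 : d * (p + q + 1) <= 1).
  { apply Rle_trans with (/ (p + q + 1) * (p + q + 1)). apply Rmult_le_compat_r; lra.
    rewrite Rinv_l; lra. }
  pose proof (exp_cont_bound n (Aof x t) _ a h Ha Hh Ha' Hh0 ltac:(lra) i j Hi Hj) as B.
  unfold Xi. change (Madd (Mscale (RtoC (-2 * x')) S) (Mscale (RtoC (-2 * t')) (Mpow n S 3))) with (Aof x' t'). change (Madd (Mscale (RtoC (-2 * x)) S) (Mscale (RtoC (-2 * t)) (Mpow n S 3))) with (Aof x t). rewrite (Aof_xt x t x' t').
  eapply Rle_lt_trans; [apply B|]. fold E.
  apply Rle_lt_trans with (d * (p + q + 1) * E). apply Rmult_le_compat_r; lra.
  assert (d * (p + q + 1) * E <= e / (2 * ((p + q + 1) * E)) * ((p + q + 1) * E)).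
  { replace (d * (p + q + 1) * E) with (d * ((p + q + 1) * E)) by ring.
    apply Rmult_le_compat_r; auto. left; apply Rmult_lt_0_compat; lra. }
  replace (e / (2 * ((p + q + 1) * E)) * ((p + q + 1) * E)) with (e / 2) in H1 by (field; split; lra).
  lra.
Qed.
End XiFacts.


Lemma Minv_spec n M : Minvertible n M ->
  Meq n n (Mmul n M (Minv n M)) Mid /\ Meq n n (Mmul n (Minv n M) M) Mid.
Proof. intros H. unfold Minv. apply epsilon_spec. exact H. Qed.

Lemma Meq_Mid_l n X : Meq n n (Mmul n Mid X) X.
Proof. intros i j Hi Hj; apply Mid_l; auto. Qed.
Lemma Meq_Mid_r n X : Meq n n (Mmul n X Mid) X.
Proof. intros i j Hi Hj; apply Mid_r; auto. Qed.

Lemma Minv_unique n M B : Minvertible n M -> Meq n n (Mmul n M B) Mid -> Meq n n (Mmul n B M) Mid ->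
  Meq n n (Minv n M) B.
Proof.
  intros HM H1 H2. destruct (Minv_spec n M HM) as [H3 H4].
  eapply Meq_trans. apply Meq_sym, Meq_Mid_r.
  eapply Meq_trans. apply Meq_mulr. apply Meq_sym, H1.
  rewrite <- Mmul_assoc. eapply Meq_trans. apply Meq_mull, H4. apply Meq_Mid_l.
Qed.

Lemma geom_Rsum f K : 0 <= f < 1 -> Rsum (fun k => f ^ k) K <= / (1 - f).
Proof.
  intros Hf. assert (E : Rsum (fun k => f ^ k) K * (1 - f) = 1 - f ^ K).
  { induction K; simpl. ring. rewrite Rmult_plus_distr_r, IHK. ring. }
  assert (0 <= f ^ K) by (apply pow_le; lra).
  apply Rmult_le_reg_r with (1 - f). lra. rewrite E, Rinv_l by lra. lra.
Qed.

Lemma Ccv_zero_bound s r : (forall K, cn (s K) <= r K) -> Un_cv r 0 -> Ccv s CZ.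
Proof.
  intros Hb Hr. split; intros e He; destruct (Hr e He) as [N HN]; exists N; intros k Hk;
  specialize (HN k Hk); unfold Rdist in *; simpl; rewrite Rminus_0_r in *;
  [pose proof (cn_re (s k))|pose proof (cn_im (s k))]; specialize (Hb k);
  rewrite Rabs_right in HN by (apply Rle_ge; eapply Rle_trans; [apply cn_pos|apply Hb]); lra.
Qed.

Lemma Csum_telescope (f : nat -> Cplx) p : Csum (fun k => Cadd (f k) (Copp (f (S k)))) p = Cadd (f O) (Copp (f p)).
Proof. induction p; simpl. ring. rewrite IHp. ring. Qed.

Section Neumann.
Variables (n : nat) (F : Mat) (f : R).
Hypothesis HF : rb n F f.
Hypothesis Hf : 0 <= f <= / 2.
Let G := Mscale (RtoC (-1)) F.
Let Pk K : Mat := fun i j => Csum (fun k => Mpow n G k i j) (S K).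

Lemma G_rb : rb n G f.
Proof. unfold G. eapply rb_mono. apply rb_scale; eauto. rewrite cn_RtoC. rewrite Rabs_left by lra. lra. Qed.

Lemma Pk_r K X i j : Mmul n (Pk K) X i j = Csum (fun k => Mmul n (Mpow n G k) X i j) (S K).
Proof.
  unfold Mmul at 1, Pk. transitivity (Csum (fun l => Csum (fun k => Cmul (Mpow n G k i l) (X l j)) (S K)) n).
  apply Csum_ext; intros; rewrite <- Csum_mulr; auto. rewrite Csum_swap; auto.
Qed.
Lemma Pk_l K X i j : Mmul n X (Pk K) i j = Csum (fun k => Mmul n X (Mpow n G k) i j) (S K).
Proof.
  unfold Mmul at 1, Pk. transitivity (Csum (fun l => Csum (fun k => Cmul (X i l) (Mpow n G k l j)) (S K)) n).
  apply Csum_ext; intros; rewrite <- Csum_mull; auto. rewrite Csum_swap; auto.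
Qed.

Lemma neumann : exists N : Mat,
  Meq n n (Mmul n (Madd Mid F) N) Mid /\ Meq n n (Mmul n N (Madd Mid F)) Mid /\
  forall i j, (i < n)%nat -> (j < n)%nat -> cn (Cadd (N i j) (Copp (Mid i j))) <= 2 * f.
Proof.
  pose proof G_rb as HG.
  assert (Hf1 : Rabs f < 1) by (rewrite Rabs_right; lra).
  destruct (Mseries_cv n (fun k => Mpow n G k) (fun k => 1 * f ^ k) (/ (1 - f))) as [L HL].
  { intros k i j Hi Hj. rewrite Rmult_1_l. apply rb_entry with n; auto. apply rb_pow; auto; lra. }
  { apply (GP_infinite f Hf1). }
  assert (Hpow0 : forall i j, Ccv (fun K => Mpow n G (S K) i j) CZ \/ ~ ((i < n)%nat /\ (j < n)%nat)).
  { intros i j. destruct (Nat.lt_ge_cases i n), (Nat.lt_ge_cases j n); try (right; lia).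
    left. apply Ccv_zero_bound with (r := fun K => f ^ (S K)).
    - intros K. apply rb_entry with n; auto. apply rb_pow; auto; lra.
    - intros e He. destruct (pow_lt_1_zero f Hf1 e He) as [N HN]. exists N. intros k Hk.
      unfold Rdist. rewrite Rminus_0_r. apply HN. lia. }
  assert (Hlim : forall X i j, (i < n)%nat -> (j < n)%nat ->
            Ccv (fun K => Mmul n (Pk K) X i j) (Mmul n L X i j) /\ Ccv (fun K => Mmul n X (Pk K) i j) (Mmul n X L i j)).
  { intros X i j Hi Hj. split.
    - unfold Mmul at 2. apply Ccv_ext with (s := fun K => Csum (fun l => Cmul (Pk K i l) (X l j)) n); [reflexivity|].
      apply (Ccv_sum (fun K l => Cmul (Pk K i l) (X l j))). intros l Hl. apply Ccv_mul. apply HL; auto. apply Ccv_const.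
    - unfold Mmul at 2. apply Ccv_ext with (s := fun K => Csum (fun l => Cmul (X i l) (Pk K l j)) n); [reflexivity|].
      apply (Ccv_sum (fun K l => Cmul (X i l) (Pk K l j))). intros l Hl. apply Ccv_mul. apply Ccv_const. apply HL; auto. }
  assert (EF : Madd Mid F = Msub Mid G).
  { unfold G; mext; unfold Madd, Msub, Mscale; apply Ceq; simpl; ring. }
  exists L. rewrite EF. split; [|split].
  - intros i j Hi Hj. destruct (Hlim (Msub Mid G) i j Hi Hj) as [_ H2].
    destruct (Hpow0 i j) as [Hz|Hz]; [|exfalso; tauto].
    apply (Ccv_unique _ _ _ H2).
    apply Ccv_ext with (s := fun K => Cadd (Mid i j) (Copp (Mpow n G (S K) i j))).
    + intros K. rewrite Pk_l. rewrite (Csum_ext _ (fun k => Cadd (Mpow n G k i j) (Copp (Mpow n G (S k) i j)))).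
      rewrite Csum_telescope. reflexivity.
      intros k _. rewrite Mmul_subl. unfold Msub. rewrite Mid_l by auto.
      rewrite (pow_comm n G G (Meq_refl _ _ _) k i j Hi Hj). reflexivity.
    + assert (Hc : Ccv (fun K => Cadd (Mid i j) (Copp (Mpow n G (S K) i j))) (Cadd (Mid i j) (Copp CZ)))
        by (apply Ccv_add; [apply Ccv_const | apply Ccv_opp; auto]).
      replace (Cadd (Mid i j) (Copp CZ)) with (Mid i j) in Hc by ring. exact Hc.
  - intros i j Hi Hj. destruct (Hlim (Msub Mid G) i j Hi Hj) as [H1 _].
    destruct (Hpow0 i j) as [Hz|Hz]; [|exfalso; tauto].
    apply (Ccv_unique _ _ _ H1).
    apply Ccv_ext with (s := fun K => Cadd (Mid i j) (Copp (Mpow n G (S K) i j))).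
    + intros K. rewrite Pk_r. rewrite (Csum_ext _ (fun k => Cadd (Mpow n G k i j) (Copp (Mpow n G (S k) i j)))).
      rewrite Csum_telescope. reflexivity.
      intros k _. rewrite Mmul_subr. unfold Msub. rewrite Mid_r by auto. reflexivity.
    + assert (Hc : Ccv (fun K => Cadd (Mid i j) (Copp (Mpow n G (S K) i j))) (Cadd (Mid i j) (Copp CZ)))
        by (apply Ccv_add; [apply Ccv_const | apply Ccv_opp; auto]).
      replace (Cadd (Mid i j) (Copp CZ)) with (Mid i j) in Hc by ring. exact Hc.
  - intros i j Hi Hj. apply (Ccv_bound _ _ _ _ (HL i j Hi Hj)).
    intros K. rewrite Csum_shift. simpl (Mpow n G 0).
    replace (Cadd (Cadd (Mid i j) (Csum (fun k => Mpow n G (S k) i j) K)) (Copp (Mid i j)))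
      with (Csum (fun k => Mpow n G (S k) i j) K) by ring.
    eapply Rle_trans. apply cn_Csum.
    eapply Rle_trans. apply Rsum_le with (g := fun k => f * f ^ k).
    { intros k _. change (f * f ^ k) with (f ^ (S k)). apply rb_entry with n; auto. apply rb_pow; auto; lra. }
    rewrite Rsum_mull. assert (Hg := geom_Rsum f K ltac:(lra)).
    assert (/ (1 - f) <= 2).
    { apply Rmult_le_reg_r with (1 - f). lra. rewrite Rinv_l by lra. lra. }
    assert (0 <= Rsum (fun k => f ^ k) K) by (apply Rsum_pos; intros; apply pow_le; lra).
    change (Rsum (pow f) K) with (Rsum (fun k => f ^ k) K). apply Rle_trans with (f * 2); [apply Rmult_le_compat_l; lra | lra].
Qed.
End Neumann.

Lemma rb_of_entry n X c : (forall i j, (i < n)%nat -> (j < n)%nat -> cn (X i j) <= c) -> rb n X (INR n * c).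
Proof.
  intros H i Hi. apply Rle_trans with (Rsum (fun _ => c) n).
  apply Rsum_le; intros; apply H; auto.
  right. clear. induction n. simpl; ring. change (Rsum (fun _ => c) (S n)) with (Rsum (fun _ => c) n + c).
  rewrite S_INR, IHn. ring.
Qed.

Lemma Meq_mul2 r p c X X' Y Y' : Meq r p X X' -> Meq p c Y Y' -> Meq r c (Mmul p X Y) (Mmul p X' Y').
Proof. intros H1 H2. eapply Meq_trans. apply Meq_mull, H1. apply Meq_mulr, H2. Qed.

Lemma perturb n M0 M' B f beta : Meq n n (Mmul n M0 B) Mid -> Meq n n (Mmul n B M0) Mid ->
  rb n B beta -> 0 <= beta ->
  rb n (Mmul n B (Msub M' M0)) f -> 0 <= f <= / 2 ->
  exists B', Meq n n (Mmul n M' B') Mid /\ Meq n n (Mmul n B' M') Mid /\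
    forall i j, (i < n)%nat -> (j < n)%nat -> cn (Cadd (B' i j) (Copp (B i j))) <= INR n * (2 * f) * beta.
Proof.
  intros H1 H2 HB Hb HF Hf.
  set (D := Msub M' M0). set (F := Mmul n B D).
  destruct (neumann n F f HF Hf) as [N [N1 [N2 N3]]].
  assert (EM : M' = Madd M0 D) by (unfold D; mext; unfold Madd, Msub; ring).
  assert (K1 : Meq n n (Mmul n M0 (Madd Mid F)) M').
  { rewrite Mmul_addr. rewrite EM. apply Meq_add. apply Meq_Mid_r.
    unfold F. rewrite <- Mmul_assoc. eapply Meq_trans. apply Meq_mull, H1. apply Meq_Mid_l. }
  assert (K2 : Meq n n (Mmul n B M') (Madd Mid F)).
  { rewrite EM, Mmul_addr. apply Meq_add. auto. apply Meq_refl. }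
  exists (Mmul n N B). split; [|split].
  - eapply Meq_trans. apply Meq_mull. apply Meq_sym, K1.
    rewrite !Mmul_assoc. eapply Meq_trans. apply Meq_mulr.
    rewrite <- Mmul_assoc. apply Meq_mull. apply N1.
    eapply Meq_trans. apply Meq_mulr. apply Meq_Mid_l. auto.
  - rewrite Mmul_assoc. eapply Meq_trans. apply Meq_mulr. apply K2. auto.
  - intros i j Hi Hj.
    assert (E : Cadd (Mmul n N B i j) (Copp (B i j)) = Mmul n (Msub N Mid) B i j).
    { rewrite Mmul_subl. unfold Msub. rewrite Mid_l; auto. }
    rewrite E. unfold Mmul. eapply Rle_trans. apply cn_Csum.
    apply Rle_trans with (Rsum (fun _ => 2 * f * beta) n).
    + apply Rsum_le. intros k Hk. eapply Rle_trans. apply cn_mul.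
      apply Rmult_le_compat; try apply cn_pos. apply N3; auto. apply rb_entry with n; auto.
    + right. clear. induction n. simpl; ring.
      change (Rsum (fun _ => 2 * f * beta) (S n)) with (Rsum (fun _ => 2 * f * beta) n + 2 * f * beta).
      rewrite S_INR, IHn. ring.
Qed.

Lemma inv_near n (Mf : R -> R -> Mat) x0 t0 :
  (forall e, 0 < e -> exists d, 0 < d /\ forall x' t', Rabs (x' - x0) < d -> Rabs (t' - t0) < d ->
     forall i j, (i < n)%nat -> (j < n)%nat -> cn (Cadd (Mf x' t' i j) (Copp (Mf x0 t0 i j))) < e) ->
  Minvertible n (Mf x0 t0) ->
  forall e, 0 < e -> exists d, 0 < d /\ forall x' t', Rabs (x' - x0) < d -> Rabs (t' - t0) < d ->
     Minvertible n (Mf x' t') /\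
     forall i j, (i < n)%nat -> (j < n)%nat -> cn (Cadd (Minv n (Mf x' t') i j) (Copp (Minv n (Mf x0 t0) i j))) < e.
Proof.
  intros Hc Hinv e He.
  set (M0 := Mf x0 t0). set (B := Minv n M0).
  destruct (Minv_spec n M0 Hinv) as [H1 H2]. fold B in H1, H2.
  destruct (rb_exists n B) as [b0 Hb0]. set (beta := Rabs b0).
  assert (HB : rb n B beta) by (apply rb_mono with b0; auto; apply RRle_abs).
  assert (Hbeta : 0 <= beta) by apply Rabs_pos.
  set (c := (beta + 1) * (INR n + 1)).
  assert (Hc1 : 1 <= c) by (unfold c; pose proof (pos_INR n); nra).
  set (eta := Rmin (/ (2 * c)) (e / (4 * (c * c)))).
  assert (Heta : 0 < eta).
  { apply Rmin_pos. apply Rinv_0_lt_compat; lra. apply Rdiv_lt_0_compat; nra. }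
  pose proof (Rmin_l (/ (2 * c)) (e / (4 * (c * c)))) as E1. fold eta in E1.
  pose proof (Rmin_r (/ (2 * c)) (e / (4 * (c * c)))) as E2. fold eta in E2.
  destruct (Hc eta Heta) as [d [Hd Hd2]].
  exists d; split; auto. intros x' t' Hx Ht.
  set (M' := Mf x' t').
  assert (HD : rb n (Msub M' M0) (INR n * eta)).
  { apply rb_of_entry. intros i j Hi Hj. left. apply Hd2; auto. }
  set (f := beta * (INR n * eta)).
  assert (Hf0 : 0 <= f) by (unfold f; apply Rmult_le_pos; [lra|apply Rmult_le_pos; [apply pos_INR|lra]]).
  assert (Hfc : f <= c * eta).
  { unfold f, c. pose proof (pos_INR n). rewrite <- Rmult_assoc. apply Rmult_le_compat_r; [lra|]. nra. }
  assert (Hce : c * eta <= / 2).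
  { apply Rle_trans with (c * / (2 * c)). apply Rmult_le_compat_l; lra.
    right. field. lra. }
  destruct (perturb n M0 M' B f beta H1 H2 HB Hbeta (rb_mul _ _ _ _ _ HB HD) ltac:(lra)) as [B' [K1 [K2 K3]]].
  assert (Hinv' : Minvertible n M') by (exists B'; auto).
  split; auto. intros i j Hi Hj.
  pose proof (Minv_unique n M' B' Hinv' K1 K2) as U.
  rewrite (U i j Hi Hj).
  eapply Rle_lt_trans. apply K3; auto.
  assert (INR n * (2 * f) * beta <= 2 * (c * c) * eta).
  { unfold f, c. pose proof (pos_INR n). assert (0 <= INR n * beta) by nra.
    assert (INR n * beta <= (beta + 1) * (INR n + 1)) by nra.
    replace (INR n * (2 * (beta * (INR n * eta))) * beta) with (2 * eta * ((INR n * beta) * (INR n * beta))) by ring.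
    replace (2 * ((beta + 1) * (INR n + 1) * ((beta + 1) * (INR n + 1))) * eta)
      with (2 * eta * (((beta + 1) * (INR n + 1)) * ((beta + 1) * (INR n + 1)))) by ring.
    apply Rmult_le_compat_l. lra. apply Rmult_le_compat; auto. }
  assert (2 * (c * c) * eta <= 2 * (c * c) * (e / (4 * (c * c)))).
  { apply Rmult_le_compat_l; nra. }
  replace (2 * (c * c) * (e / (4 * (c * c)))) with (e / 2) in H0 by (field; nra).
  lra.
Qed.

Definition Clim0 (q : R -> Cplx) (L : Cplx) : Prop :=
  forall e, 0 < e -> exists d, 0 < d /\ forall h, h <> 0 -> Rabs h < d -> cn (Cadd (q h) (Copp L)) < e.

Lemma Clim0_const c : Clim0 (fun _ => c) c.
Proof. intros e He; exists 1; split; [lra|]; intros. replace (Cadd c (Copp c)) with CZ by ring. rewrite cn_zero; lra. Qed.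

Lemma Clim0_add q1 q2 L1 L2 : Clim0 q1 L1 -> Clim0 q2 L2 -> Clim0 (fun h => Cadd (q1 h) (q2 h)) (Cadd L1 L2).
Proof.
  intros H1 H2 e He. destruct (H1 (e/2) ltac:(lra)) as [d1 [Hd1 K1]]. destruct (H2 (e/2) ltac:(lra)) as [d2 [Hd2 K2]].
  exists (Rmin d1 d2); split. apply Rmin_pos; auto. intros h Hh Hd.
  pose proof (Rmin_l d1 d2); pose proof (Rmin_r d1 d2).
  specialize (K1 h Hh ltac:(lra)); specialize (K2 h Hh ltac:(lra)).
  replace (Cadd (Cadd (q1 h) (q2 h)) (Copp (Cadd L1 L2))) with (Cadd (Cadd (q1 h) (Copp L1)) (Cadd (q2 h) (Copp L2))) by ring.
  eapply Rle_lt_trans. apply cn_add. lra.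
Qed.

Lemma Clim0_opp q L : Clim0 q L -> Clim0 (fun h => Copp (q h)) (Copp L).
Proof.
  intros H e He. destruct (H e He) as [d [Hd K]]. exists d; split; auto. intros h Hh Hd'.
  replace (Cadd (Copp (q h)) (Copp (Copp L))) with (Copp (Cadd (q h) (Copp L))) by ring.
  rewrite cn_opp; auto.
Qed.

Lemma Clim0_mul q1 q2 L1 L2 : Clim0 q1 L1 -> Clim0 q2 L2 -> Clim0 (fun h => Cmul (q1 h) (q2 h)) (Cmul L1 L2).
Proof.
  intros H1 H2 e He.
  set (c := cn L1 + cn L2 + 1). assert (Hc : 1 <= c) by (unfold c; pose proof (cn_pos L1); pose proof (cn_pos L2); lra).
  set (eta := Rmin 1 (e / (2 * c))). assert (Heta : 0 < eta) by (apply Rmin_pos; [lra|apply Rdiv_lt_0_compat; lra]).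
  pose proof (Rmin_l 1 (e / (2 * c))) as E1; pose proof (Rmin_r 1 (e / (2 * c))) as E2. fold eta in E1, E2.
  destruct (H1 eta Heta) as [d1 [Hd1 K1]]. destruct (H2 eta Heta) as [d2 [Hd2 K2]].
  exists (Rmin d1 d2); split. apply Rmin_pos; auto. intros h Hh Hd.
  pose proof (Rmin_l d1 d2); pose proof (Rmin_r d1 d2).
  specialize (K1 h Hh ltac:(lra)); specialize (K2 h Hh ltac:(lra)).
  set (a1 := Cadd (q1 h) (Copp L1)) in *. set (a2 := Cadd (q2 h) (Copp L2)) in *.
  replace (Cadd (Cmul (q1 h) (q2 h)) (Copp (Cmul L1 L2))) with (Cadd (Cadd (Cmul a1 a2) (Cmul a1 L2)) (Cmul L1 a2))
    by (unfold a1, a2; ring).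
  eapply Rle_lt_trans. apply cn_add. eapply Rle_lt_trans. apply Rplus_le_compat_r. apply cn_add.
  pose proof (cn_mul a1 a2). pose proof (cn_mul a1 L2). pose proof (cn_mul L1 a2).
  pose proof (cn_pos a1). pose proof (cn_pos a2). pose proof (cn_pos L1). pose proof (cn_pos L2).
  assert (cn a1 * cn a2 <= eta * 1) by (apply Rmult_le_compat; lra).
  assert (cn a1 * cn L2 <= eta * cn L2) by (apply Rmult_le_compat_r; lra).
  assert (cn L1 * cn a2 <= cn L1 * eta) by (apply Rmult_le_compat_l; lra).
  assert (eta * c <= e / 2).
  { apply Rle_trans with (e / (2 * c) * c). apply Rmult_le_compat_r; lra. right; field; lra. }
  unfold c in *. nra.
Qed.

Lemma Clim0_sum (q : nat -> R -> Cplx) (L : nat -> Cplx) p :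
  (forall k, (k < p)%nat -> Clim0 (q k) (L k)) -> Clim0 (fun h => Csum (fun k => q k h) p) (Csum L p).
Proof.
  induction p; intros H; simpl. apply Clim0_const. apply Clim0_add; auto.
Qed.

Lemma Clim0_near q q' L d0 : 0 < d0 -> (forall h, h <> 0 -> Rabs h < d0 -> q h = q' h) -> Clim0 q L -> Clim0 q' L.
Proof.
  intros Hd0 E H e He. destruct (H e He) as [d [Hd K]]. exists (Rmin d d0); split. apply Rmin_pos; auto.
  intros h Hh Hd'. pose proof (Rmin_l d d0); pose proof (Rmin_r d d0).
  rewrite <- E by (auto; lra). apply K; auto; lra.
Qed.

Definition dq (g : R -> Cplx) z h := Cmul (RtoC (/ h)) (Cadd (g (z + h)) (Copp (g z))).

Lemma cder_Clim0 g z l : cder g z l -> Clim0 (dq g z) l.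
Proof.
  intros [H1 H2] e He. destruct (H1 (e/2) ltac:(lra)) as [d1 K1]. destruct (H2 (e/2) ltac:(lra)) as [d2 K2].
  exists (Rmin d1 d2); split. apply Rmin_pos; apply cond_pos. intros h Hh Hd.
  pose proof (Rmin_l d1 d2); pose proof (Rmin_r d1 d2).
  specialize (K1 h Hh ltac:(lra)); specialize (K2 h Hh ltac:(lra)).
  unfold cn, dq; simpl. rewrite !Rmult_0_l.
  replace (/ h * (re (g (z + h)) + - re (g z)) - 0 + - re l)
    with ((re (g (z + h)) - re (g z)) / h - re l) by (field; auto).
  replace (/ h * (im (g (z + h)) + - im (g z)) + 0 + - im l)
    with ((im (g (z + h)) - im (g z)) / h - im l) by (field; auto).
  lra.
Qed.

Lemma Clim0_cder g z l : Clim0 (dq g z) l -> cder g z l.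
Proof.
  intros H. split; intros e He; destruct (H e He) as [d [Hd K]]; exists (mkposreal d Hd); simpl;
  intros h Hh Hd'; specialize (K h Hh Hd'); unfold cn, dq in K; simpl in K; rewrite !Rmult_0_l in K.
  - replace ((re (g (z + h)) - re (g z)) / h - re l)
      with (/ h * (re (g (z + h)) + - re (g z)) - 0 + - re l) by (field; auto).
    pose proof (Rabs_pos (/ h * (im (g (z + h)) + - im (g z)) + 0 + - im l)). lra.
  - replace ((im (g (z + h)) - im (g z)) / h - im l)
      with (/ h * (im (g (z + h)) + - im (g z)) + 0 + - im l) by (field; auto).
    pose proof (Rabs_pos (/ h * (re (g (z + h)) + - re (g z)) - 0 + - re l)). lra.
Qed.

Lemma inv_deriv n (Mf : R -> Mat) z L :
  hasD n n Mf z L ->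
  (forall e, 0 < e -> exists d, 0 < d /\ forall h, Rabs h < d ->
     Minvertible n (Mf (z + h)) /\
     forall i j, (i < n)%nat -> (j < n)%nat -> cn (Cadd (Minv n (Mf (z + h)) i j) (Copp (Minv n (Mf z) i j))) < e) ->
  hasD n n (fun y => Minv n (Mf y)) z (Mscale (RtoC (-1)) (Mmul n (Minv n (Mf z)) (Mmul n L (Minv n (Mf z))))).
Proof.
  intros HD Hc i j Hi Hj. apply Clim0_cder.
  destruct (Hc 1 ltac:(lra)) as [d0 [Hd0 K0]].
  assert (Hinv0 : Minvertible n (Mf z)) by (destruct (K0 0 ltac:(rewrite Rabs_R0; lra)) as [HH _]; rewrite Rplus_0_r in HH; auto).
  set (W := Minv n (Mf z)).
  apply Clim0_near with (q := fun h => Copp (Csum (fun k => Cmul (Minv n (Mf (z + h)) i k)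
       (Csum (fun l => Cmul (dq (fun y => Mf y k l) z h) (W l j)) n)) n)) (d0 := d0); auto.
  - intros h Hh Hd. destruct (K0 h Hd) as [Hinvh _].
    set (Wh := Minv n (Mf (z + h))).
    destruct (Minv_spec n _ Hinvh) as [A1 A2]. destruct (Minv_spec n _ Hinv0) as [B1 B2]. fold Wh W in A1, A2, B1, B2.
    assert (E : Meq n n (Mmul n Wh (Mmul n (Msub (Mf (z + h)) (Mf z)) W)) (Msub W Wh)).
    { rewrite Mmul_subl, Mmul_subr. apply Meq_sub.
      - rewrite <- Mmul_assoc. eapply Meq_trans. apply Meq_mull, A2. apply Meq_Mid_l.
      - eapply Meq_trans. apply Meq_mulr, B1. apply Meq_Mid_r. }
    specialize (E i j Hi Hj).
    symmetry. unfold dq at 1. cbv beta.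
    replace (Cadd (Wh i j) (Copp (W i j))) with (Copp (Cadd (W i j) (Copp (Wh i j)))) by ring.
    fold Wh W. replace (Cadd (Wh i j) (Copp (W i j))) with (Copp (Cadd (W i j) (Copp (Wh i j)))) by ring.
    change (Msub W Wh i j) with (Cadd (W i j) (Copp (Wh i j))) in E. rewrite <- E.
    unfold Mmul at 1.
    match goal with |- Cmul ?c (Copp (Csum ?F n)) = _ =>
      replace (Cmul c (Copp (Csum F n))) with (Copp (Csum (fun k => Cmul c (F k)) n)) by (rewrite Csum_mull; ring) end.
    f_equal. apply Csum_ext. intros k _. cbv beta. unfold Mmul.
    match goal with |- Cmul ?c (Cmul ?a (Csum ?F n)) = _ =>
      replace (Cmul c (Cmul a (Csum F n))) with (Cmul a (Csum (fun l => Cmul c (F l)) n)) by (rewrite Csum_mull; ring) end.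
    f_equal. apply Csum_ext. intros l _. unfold dq, Msub. ring.
  - unfold Mscale, Mmul. replace (Cmul (RtoC (-1)) _) with
      (Copp (Csum (fun k => Cmul (W i k) (Csum (fun l => Cmul (L k l) (W l j)) n)) n)) by (apply Ceq; simpl; ring).
    apply Clim0_opp. apply Clim0_sum. intros k Hk. apply Clim0_mul.
    + intros e He. destruct (Hc e He) as [d [Hd K]]. exists d; split; auto. intros h Hh Hd'.
      apply (K h Hd'); auto.
    + apply Clim0_sum. intros l Hl. apply Clim0_mul. apply cder_Clim0. apply HD; auto. apply Clim0_const.
Qed.

Import ListNotations.
Import ListNotations.

Inductive atom := aG | aS | aV | aU.
Inductive dm := Dn | Dm.
Definition dm_eqb (a b : dm) : bool := match a, b with Dn, Dn | Dm, Dm => true | _, _ => false end.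
Lemma dm_eqb_eq a b : dm_eqb a b = true -> a = b.
Proof. destruct a, b; simpl; congruence. Qed.
Definition atom_eqb (a b : atom) : bool :=
  match a, b with aG, aG | aS, aS | aV, aV | aU, aU => true | _, _ => false end.
Lemma atom_eqb_eq a b : atom_eqb a b = true -> a = b.
Proof. destruct a, b; simpl; congruence. Qed.
Fixpoint word_eqb (v w : list atom) : bool :=
  match v, w with
  | nil, nil => true
  | a :: v', b :: w' => atom_eqb a b && word_eqb v' w'
  | _, _ => false end.
Lemma word_eqb_eq v w : word_eqb v w = true -> v = w.
Proof.
  revert w; induction v; destruct w; simpl; try congruence.
  intros H; apply andb_prop in H; destruct H as [H1 H2].
  apply atom_eqb_eq in H1; apply IHv in H2; subst; auto.
Qed.

Definition arow a := match a with aU => Dm | _ => Dn end.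
Definition acol a := match a with aV => Dm | _ => Dn end.

Definition Mzero : Mat := fun _ _ => CZ.
Definition poly := list (Z * list atom).

Section Interp.
Variables (n m : nat) (S V U : Mat).
Definition dI d := match d with Dn => n | Dm => m end.
Definition ai (g : Mat) a := match a with aG => g | aS => S | aV => V | aU => U end.
Fixpoint wint (g : Mat) (w : list atom) : Mat :=
  match w with
  | nil => Mid
  | a :: w' => match w' with nil => ai g a | _ => Mmul (dI (acol a)) (ai g a) (wint g w') end
  end.
Fixpoint pint (g : Mat) (p : poly) : Mat :=
  match p with
  | nil => Mzero
  | (c, w) :: p' => Madd (Mscale (RtoC (IZR c)) (wint g w)) (pint g p')
  end.

Lemma Madd_zero_r A : Madd A Mzero = A.
Proof. apply functional_extensionality; intro; apply functional_extensionality; intro; unfold Madd, Mzero; ring. Qed.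
Lemma Madd_assoc A B C : Madd (Madd A B) C = Madd A (Madd B C).
Proof. apply functional_extensionality; intro; apply functional_extensionality; intro; unfold Madd; ring. Qed.
Lemma Mmul_zero_l p A : Mmul p Mzero A = Mzero.
Proof. apply functional_extensionality; intro; apply functional_extensionality; intro; unfold Mmul, Mzero.
  rewrite Csum_ext with (g := fun _ => CZ). apply Csum_zero. intros; ring. Qed.
Lemma Mmul_zero_r p A : Mmul p A Mzero = Mzero.
Proof. apply functional_extensionality; intro; apply functional_extensionality; intro; unfold Mmul, Mzero.
  rewrite Csum_ext with (g := fun _ => CZ). apply Csum_zero. intros; ring. Qed.
Lemma Mscale_mul c d A : Mscale c (Mscale d A) = Mscale (Cmul c d) A.
Proof. apply functional_extensionality; intro; apply functional_extensionality; intro; unfold Mscale; ring. Qed.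
Lemma Mscale_add c A B : Mscale c (Madd A B) = Madd (Mscale c A) (Mscale c B).
Proof. apply functional_extensionality; intro; apply functional_extensionality; intro; unfold Mscale, Madd; ring. Qed.
Lemma Mscale_zero c : Mscale c Mzero = Mzero.
Proof. apply functional_extensionality; intro; apply functional_extensionality; intro; unfold Mscale, Mzero; ring. Qed.
Lemma RtoC_IZR_mul c d : RtoC (IZR (c * d)%Z) = Cmul (RtoC (IZR c)) (RtoC (IZR d)).
Proof. apply Ceq; simpl; [rewrite mult_IZR|]; ring. Qed.
Lemma RtoC_IZR_add c d : RtoC (IZR (c + d)%Z) = Cadd (RtoC (IZR c)) (RtoC (IZR d)).
Proof. apply Ceq; simpl; [rewrite plus_IZR|]; ring. Qed.

Lemma pint_app g p q : pint g (p ++ q) = Madd (pint g p) (pint g q).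
Proof.
  induction p as [|[c w] p IH]; simpl.
  - apply functional_extensionality; intro; apply functional_extensionality; intro; unfold Madd, Mzero; ring.
  - rewrite IH, Madd_assoc; auto.
Qed.

Lemma wint_cons g a w : w <> nil -> wint g (a :: w) = Mmul (dI (acol a)) (ai g a) (wint g w).
Proof. destruct w; simpl; congruence. Qed.

Lemma wint_app g v w : v <> nil -> w <> nil ->
  wint g (v ++ w) = Mmul (dI (acol (last v aG))) (wint g v) (wint g w).
Proof.
  induction v as [|a v IH]; intros Hv Hw; [congruence|].
  destruct v as [|b v].
  - simpl app. rewrite wint_cons by auto. reflexivity.
  - change ((a :: b :: v) ++ w) with (a :: ((b :: v) ++ w)).
    rewrite wint_cons by (simpl; congruence).
    rewrite IH by (auto; congruence).
    rewrite (wint_cons g a (b :: v)) by congruence.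
    rewrite Mmul_assoc. reflexivity.
Qed.

Definition mapc (f : list atom -> list atom) (q : poly) : poly := map (fun cv => (fst cv, f (snd cv))) q.
Definition scalep (c : Z) (q : poly) : poly := map (fun cv => ((c * fst cv)%Z, snd cv)) q.
Definition nonemp (q : poly) := forall c v, In (c, v) q -> v <> nil.

Lemma pint_scalep g c q : pint g (scalep c q) = Mscale (RtoC (IZR c)) (pint g q).
Proof.
  induction q as [|[d v] q IH]; simpl. rewrite Mscale_zero; auto.
  rewrite IH, Mscale_add, Mscale_mul, RtoC_IZR_mul; auto.
Qed.

Lemma pint_post g q w d : (forall c v, In (c, v) q -> v <> nil /\ acol (last v aG) = d) -> w <> nil ->
  pint g (mapc (fun v => v ++ w) q) = Mmul (dI d) (pint g q) (wint g w).
Proof.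
  intros Hq Hw. induction q as [|[c v] q IH]; simpl.
  - rewrite Mmul_zero_l; auto.
  - rewrite Mmul_addl, Mmul_scalel, IH by (intros; eapply Hq; right; eauto).
    destruct (Hq c v (or_introl eq_refl)) as [H1 H2].
    rewrite wint_app, H2 by auto. auto.
Qed.

Lemma pint_pre g q w : nonemp q -> w <> nil ->
  pint g (mapc (fun v => w ++ v) q) = Mmul (dI (acol (last w aG))) (wint g w) (pint g q).
Proof.
  intros Hq Hw. induction q as [|[c v] q IH]; simpl.
  - rewrite Mmul_zero_r; auto.
  - rewrite Mmul_addr, Mmul_scaler, IH by (intros ? ? ?; eapply Hq; right; eauto).
    rewrite wint_app by (auto; eapply Hq; left; eauto). auto.
Qed.

Fixpoint wty (w : list atom) : option (dm * dm) :=
  match w with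
  | nil => None
  | a :: w' => match w' with
               | nil => Some (arow a, acol a)
               | _ => match wty w' with
                      | Some (r, c) => if dm_eqb (acol a) r then Some (arow a, c) else None
                      | None => None end end
  end.
Definition ty_eqb (x : option (dm * dm)) r c :=
  match x with Some (r', c') => dm_eqb r r' && dm_eqb c c' | None => false end.
Definition pty (r c : dm) (p : poly) : bool := forallb (fun cv => ty_eqb (wty (snd cv)) r c) p.

Lemma wty_nonnil w r c : wty w = Some (r, c) -> w <> nil.
Proof. destruct w; simpl; congruence. Qed.

Lemma wty_last w r c : wty w = Some (r, c) -> acol (last w aG) = c.
Proof.
  revert r c. induction w as [|a w IH]; intros r c; simpl; [congruence|].
  destruct w as [|b w]. congruence.
  destruct (wty (b :: w)) as [[r' c']|] eqn:E; [|congruence].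
  destruct (dm_eqb (acol a) r'); [|congruence]. intros H; inversion H; subst.
  apply (IH r' c eq_refl).
Qed.

Lemma pty_spec r c p : pty r c p = true -> forall d w, In (d, w) p -> wty w = Some (r, c).
Proof.
  unfold pty. rewrite forallb_forall. intros H d w Hin. specialize (H _ Hin). simpl in H.
  destruct (wty w) as [[r' c']|]; [|discriminate]. apply andb_prop in H; destruct H as [H1 H2].
  apply dm_eqb_eq in H1; apply dm_eqb_eq in H2; subst; auto.
Qed.

Fixpoint dword (dg : poly) (w : list atom) : poly :=
  match w with
  | nil => nil
  | a :: w' => (match a with aG => mapc (fun v => v ++ w') dg | _ => nil end)
               ++ mapc (fun v => a :: v) (dword dg w')
  end.
Definition dpoly (dg : poly) (p : poly) : poly :=
  flat_map (fun cw => scalep (fst cw) (dword dg (snd cw))) p.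

Lemma in_mapc f q c v : In (c, v) (mapc f q) -> exists v', In (c, v') q /\ v = f v'.
Proof.
  induction q as [|[d u] q IH]; simpl; [tauto|]. intros [H|H].
  - inversion H; subst; eauto.
  - destruct (IH H) as [v' [H1 H2]]; eauto.
Qed.

Lemma dword_nonemp dg w : nonemp dg -> nonemp (dword dg w).
Proof.
  intros Hd. induction w as [|a w IH]; simpl; intros c v Hin; [tauto|].
  apply in_app_or in Hin; destruct Hin as [Hin|Hin].
  - destruct a; simpl in Hin; try tauto. apply in_mapc in Hin. destruct Hin as [v' [H1 H2]]; subst.
    apply Hd in H1. destruct v'; simpl; congruence.
  - apply in_mapc in Hin. destruct Hin as [v' [_ H2]]; subst; congruence.
Qed.

Lemma pint_mapc_id g q : pint g (mapc (fun v => v ++ nil) q) = pint g q.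
Proof. induction q as [|[c v] q IH]; simpl; auto. rewrite app_nil_r, IH; auto. Qed.

Lemma pint_cons g a q : nonemp q ->
  pint g (mapc (fun v => a :: v) q) = Mmul (dI (acol a)) (ai g a) (pint g q).
Proof.
  intros Hq. induction q as [|[c v] q IH]; simpl.
  - rewrite Mmul_zero_r; auto.
  - rewrite Mmul_addr, Mmul_scaler, IH by (intros ? ? ?; eapply Hq; right; eauto).
    destruct v; [exfalso; exact (Hq _ _ (or_introl eq_refl) eq_refl)|auto].
Qed.

Section Deriv.
Variables (gf : R -> Mat) (z : R) (Lg : Mat) (dg : poly).
Hypothesis Hg : hasD n n gf z Lg.
Hypothesis HLg : Meq n n Lg (pint (gf z) dg).
Hypothesis Hdg : pty Dn Dn dg = true.

Lemma dg_props : forall c v, In (c, v) dg -> v <> nil /\ acol (last v aG) = Dn.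
Proof.
  intros c v Hin. pose proof (pty_spec _ _ _ Hdg _ _ Hin) as H.
  split; [eapply wty_nonnil; eauto | eapply wty_last; eauto].
Qed.
Lemma dg_nonemp : nonemp dg.
Proof. intros c v H; apply (dg_props c v H). Qed.

Lemma dword_sound w r c : wty w = Some (r, c) ->
  hasD (dI r) (dI c) (fun y => wint (gf y) w) z (pint (gf z) (dword dg w)).
Proof.
  revert r c. induction w as [|a w IH]; intros r c Hw; [discriminate|].
  destruct w as [|b w].
  - simpl in Hw. inversion Hw; subst. simpl dword. rewrite app_nil_r.
    destruct a; simpl.
    + rewrite pint_mapc_id. apply hasD_Meq with Lg; auto.
    + apply hasD_const.
    + apply hasD_const.
    + apply hasD_const.
  - remember (b :: w) as w'.
    assert (Hw' : exists r', wty w' = Some (r', c) /\ acol a = r').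
    { simpl in Hw. rewrite Heqw' in Hw. rewrite <- Heqw' in Hw.
      destruct (wty w') as [[r' c']|]; [|discriminate].
      destruct (dm_eqb (acol a) r') eqn:E; [|discriminate]. inversion Hw; subst.
      apply dm_eqb_eq in E; eauto. }
    destruct Hw' as [r' [Hw1 Hw2]].
    assert (Hr : r = arow a).
    { simpl in Hw. rewrite Heqw' in Hw. rewrite <- Heqw' in Hw. rewrite Hw1 in Hw.
      destruct (dm_eqb (acol a) r'); inversion Hw; auto. }
    subst r. assert (Hne : w' <> nil) by (subst; congruence).
    apply hasD_fext with (f := fun y => Mmul (dI (acol a)) (ai (gf y) a) (wint (gf y) w')).
    { intros y; rewrite wint_cons; auto. }
    simpl dword. rewrite pint_app, pint_cons by (apply dword_nonemp, dg_nonemp).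
    assert (Ha : hasD (dI (arow a)) (dI (acol a)) (fun y => ai (gf y) a) z
                   (match a with aG => pint (gf z) dg | _ => Mzero end)).
    { destruct a; simpl; try apply hasD_const. apply hasD_Meq with Lg; auto. }
    subst r'. pose proof (hasD_mul _ _ _ _ _ _ _ _ Ha (IH _ _ Hw1)) as HM.
    eapply hasD_Meq; [|exact HM].
    apply Meq_add; [|apply Meq_refl].
    destruct a; simpl; try (rewrite Mmul_zero_l; apply Meq_refl).
    rewrite (pint_post _ _ _ Dn); auto. apply Meq_refl. apply dg_props.
Qed.

Lemma dpoly_sound p r c : pty r c p = true ->
  hasD (dI r) (dI c) (fun y => pint (gf y) p) z (pint (gf z) (dpoly dg p)).
Proof.
  intros Hp. pose proof (pty_spec _ _ _ Hp) as Hs. clear Hp.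
  induction p as [|[d w] p IH]; simpl.
  - apply hasD_const.
  - rewrite pint_app, pint_scalep. apply hasD_add.
    + apply hasD_scale. apply dword_sound. eapply Hs; left; eauto.
    + apply IH. intros; eapply Hs; right; eauto.
Qed.
End Deriv.

Definition rhsR : poly := [(1%Z, [aG; aS; aS]); ((-1)%Z, [aG; aV; aU; aS; aG]); (1%Z, [aG; aS; aV; aU; aG])].

Fixpoint rw1 (pre : list atom) (w : list atom) : option poly :=
  match w with
  | nil => None
  | a :: w' =>
    match w with
    | aS :: aS :: aG :: s =>
      match pre, s with
      | _ :: _, _ :: _ =>
        if dm_eqb (acol (last pre aG)) Dn
        then Some (mapc (fun v => pre ++ v ++ s) rhsR)
        else rw1 (pre ++ [a]) w'
      | _, _ => rw1 (pre ++ [a]) w'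
      end
    | _ => rw1 (pre ++ [a]) w'
    end
  end.

Definition nfstep (p : poly) : poly :=
  flat_map (fun cw => match rw1 nil (snd cw) with
                      | Some q => scalep (fst cw) q
                      | None => [cw] end) p.
Fixpoint nfiter (k : nat) (p : poly) : poly :=
  match k with O => p | Datatypes.S k' => nfiter k' (nfstep p) end.

Fixpoint ins (cw : Z * list atom) (acc : poly) : poly :=
  match acc with
  | nil => [cw]
  | dv :: acc' => if word_eqb (snd cw) (snd dv) then ((fst cw + fst dv)%Z, snd dv) :: acc'
                  else dv :: ins cw acc'
  end.
Definition collect (p : poly) : poly := fold_right ins nil p.
Definition allzero (p : poly) : bool := forallb (fun cw => Z.eqb (fst cw) 0) p.

Definition pmul (p q : poly) : poly :=
  flat_map (fun cv => map (fun dw => ((fst cv * fst dw)%Z, snd cv ++ snd dw)) q) p.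

Section NF.
Variable g : Mat.
Hypothesis HR : Meq n n (wint g [aS; aS; aG]) (pint g rhsR).

Lemma Meq_mul_in2 p q A B C D : Meq p q B C -> Mmul p A (Mmul q B D) = Mmul p A (Mmul q C D).
Proof.
  intros H. apply functional_extensionality; intro i; apply functional_extensionality; intro j.
  unfold Mmul; apply Csum_ext; intros k Hk; f_equal; apply Csum_ext; intros; rewrite H; auto.
Qed.

Lemma rhsR_nonemp : nonemp rhsR.
Proof. intros c v H; simpl in H; repeat destruct H as [H|H]; inversion H; subst; congruence. Qed.

Lemma rw_core P Sf : P <> nil -> Sf <> nil -> acol (last P aG) = Dn ->
  wint g (P ++ [aS; aS; aG] ++ Sf) = pint g (mapc (fun v => P ++ v ++ Sf) rhsR).
Proof.
  intros HP HS E.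
  rewrite wint_app by (auto; destruct Sf; simpl; congruence). rewrite E.
  rewrite wint_app by (auto; congruence). simpl (last [aS; aS; aG] aG). simpl dI.
  rewrite (Meq_mul_in2 _ _ _ _ _ _ HR).
  change (Mmul n (pint g rhsR) (wint g Sf)) with (Mmul (dI Dn) (pint g rhsR) (wint g Sf)).
  rewrite <- (pint_post g rhsR Sf Dn).
  2:{ intros c v Hin; simpl in Hin; repeat destruct Hin as [Hin|Hin]; inversion Hin; subst; simpl; split; congruence. }
  2: auto.
  change (Mmul n (wint g P)) with (Mmul (dI Dn) (wint g P)). rewrite <- E.
  rewrite <- pint_pre; auto.
  - intros c v Hin. apply in_mapc in Hin. destruct Hin as [v' [H1 H2]]; subst.
    apply rhsR_nonemp in H1. destruct v'; simpl; congruence.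
Qed.

Lemma rw1_sound w pre q : rw1 pre w = Some q -> wint g (pre ++ w) = pint g q.
Proof.
  revert pre. induction w as [|a w IH]; intros pre H; [discriminate|].
  assert (Hstep : rw1 (pre ++ [a]) w = Some q -> wint g (pre ++ a :: w) = pint g q).
  { intros H'. rewrite <- (IH _ H'). rewrite <- app_assoc. reflexivity. }
  simpl in H.
  destruct a; try (apply Hstep; exact H).
  destruct w as [|a2 w]; [apply Hstep; exact H|].
  destruct a2; try (apply Hstep; exact H).
  destruct w as [|a3 s]; [apply Hstep; exact H|].
  destruct a3; try (apply Hstep; exact H).
  destruct pre as [|p0 pre]; [apply Hstep; exact H|].
  destruct s as [|s0 s]; [apply Hstep; exact H|].
  destruct (dm_eqb (acol (last (p0 :: pre) aG)) Dn) eqn:E; [|apply Hstep; exact H].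
  inversion H; subst q. apply dm_eqb_eq in E.
  change (aS :: aS :: aG :: s0 :: s) with ([aS; aS; aG] ++ (s0 :: s)).
  rewrite (rw_core (p0 :: pre) (s0 :: s)); try congruence; auto.
Qed.

Lemma nfstep_sound p : pint g (nfstep p) = pint g p.
Proof.
  induction p as [|[c w] p IH]; simpl; auto.
  rewrite pint_app, IH. f_equal.
  destruct (rw1 [] w) eqn:E; simpl.
  - rewrite pint_scalep. apply rw1_sound in E. simpl in E. rewrite E; auto.
  - rewrite Madd_zero_r; auto.
Qed.

Lemma nfiter_sound k p : pint g (nfiter k p) = pint g p.
Proof. revert p; induction k; intros p; simpl; auto. rewrite IHk, nfstep_sound; auto. Qed.
End NF.

Lemma ins_sound g cw acc : pint g (ins cw acc) = Madd (pint g [cw]) (pint g acc).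
Proof.
  destruct cw as [c w]. induction acc as [|[d v] acc IH]; simpl.
  - rewrite !Madd_zero_r; auto.
  - destruct (word_eqb w v) eqn:E; simpl.
    + apply word_eqb_eq in E; subst.
      apply functional_extensionality; intro; apply functional_extensionality; intro;
      unfold Madd, Mscale, Mzero; rewrite RtoC_IZR_add; ring.
    + rewrite IH. simpl.
      apply functional_extensionality; intro; apply functional_extensionality; intro;
      unfold Madd, Mscale, Mzero; ring.
Qed.

Lemma collect_sound g p : pint g (collect p) = pint g p.
Proof.
  induction p as [|cw p IH]; simpl; auto. rewrite ins_sound, IH. destruct cw; simpl. rewrite Madd_zero_r; auto.
Qed.

Lemma allzero_sound g p : allzero p = true -> pint g p = Mzero.
Proof.
  induction p as [|[c w] p IH]; simpl; auto. intros H; apply andb_prop in H; destruct H as [H1 H2].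
  apply Z.eqb_eq in H1; subst. rewrite IH by auto.
  apply functional_extensionality; intro; apply functional_extensionality; intro;
  unfold Madd, Mscale, Mzero; apply Ceq; simpl; ring.
Qed.

Lemma pmul_sound g p q d : (forall c v, In (c, v) p -> v <> nil /\ acol (last v aG) = d) -> nonemp q ->
  pint g (pmul p q) = Mmul (dI d) (pint g p) (pint g q).
Proof.
  intros Hp Hq. induction p as [|[c v] p IH]; simpl.
  - rewrite Mmul_zero_l; auto.
  - rewrite pint_app, Mmul_addl, IH by (intros; eapply Hp; right; eauto).
    f_equal. rewrite Mmul_scalel.
    destruct (Hp c v (or_introl eq_refl)) as [Hv Hd].
    clear IH. induction q as [|[e w] q IHq]; simpl.
    + rewrite !Mmul_zero_r, Mscale_zero; auto.
    + rewrite IHq by (intros ? ? ?; eapply Hq; right; eauto).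
      rewrite wint_app by (auto; eapply Hq; left; eauto). rewrite Hd.
      rewrite Mmul_addr, Mmul_scaler, Mscale_add, Mscale_mul, RtoC_IZR_mul. auto.
Qed.
End Interp.

Definition Mz : Mat := fun _ _ => CZ.
Lemma RtoC_m2 : RtoC (-2) = Copp (Cadd CI CI).
Proof. apply Ceq; simpl; ring. Qed.
Lemma RtoC_m1 : RtoC (-1) = Copp CI.
Proof. apply Ceq; simpl; ring. Qed.
Lemma Mmul_z_l p A : Mmul p Mz A = Mz.
Proof. mext. unfold Mmul, Mz. rewrite (Csum_ext _ (fun _ => CZ)). apply Csum_zero. intros; ring. Qed.
Lemma Mmul_z_r p A : Mmul p A Mz = Mz.
Proof. mext. unfold Mmul, Mz. rewrite (Csum_ext _ (fun _ => CZ)). apply Csum_zero. intros; ring. Qed.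

Ltac mnorm := repeat (first [rewrite Mmul_addl | rewrite Mmul_addr | rewrite Mmul_subl | rewrite Mmul_subr
                            | rewrite Mmul_scalel | rewrite Mmul_scaler | rewrite Mmul_assoc | rewrite Mmul_z_l | rewrite Mmul_z_r]).
Ltac mexact := match goal with |- Meq _ _ ?A ?B => replace A with B; [apply Meq_refl|
   mnorm; mext; unfold Madd, Msub, Mscale, Mz; rewrite ?RtoC_m2, ?RtoC_m1; ring] end.

Lemma Meq_zero_sub n A B : Meq n n (Msub A B) Mz -> Meq n n A B.
Proof. intros H i j Hi Hj. specialize (H i j Hi Hj). unfold Msub, Mz in H.
  replace (A i j) with (Cadd (Cadd (A i j) (Copp (B i j))) (B i j)) by ring. rewrite H. ring. Qed.

Section GAlg.
Variables (n : nat) (K X W : Mat).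
Let M := Msub Mid (Mmul n K X).
Hypothesis HW1 : Meq n n (Mmul n M W) Mid.
Hypothesis HW2 : Meq n n (Mmul n W M) Mid.
Let G := Mmul n X W.

Lemma R1 : Meq n n (Mmul n G M) X.
Proof. unfold G. rewrite Mmul_assoc. eapply Meq_trans. apply Meq_mulr, HW2. apply Meq_Mid_r. Qed.

Lemma R1' : Meq n n (Msub G (Mmul n G (Mmul n K X))) X.
Proof.
  eapply Meq_trans; [|apply R1]. unfold M. rewrite Mmul_subr. apply Meq_sub; [|apply Meq_refl].
  apply Meq_sym, Meq_Mid_r.
Qed.

Lemma keycomm C : comm n C X ->
  Meq n n (Msub (Mmul n G C) (Mmul n C G)) (Mmul n G (Mmul n (Msub (Mmul n K C) (Mmul n C K)) G)).
Proof.
  intros HC. apply Meq_zero_sub.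
  set (E := Msub (Msub (Mmul n G C) (Mmul n C G)) (Mmul n G (Mmul n (Msub (Mmul n K C) (Mmul n C K)) G))).
  assert (HEM : Meq n n (Mmul n E M) Mz).
  { assert (T1 : Meq n n (Mmul n E M)
       (Madd (Msub (Msub (Mmul n G (Mmul n C M)) (Mmul n C (Mmul n G M))) (Mmul n G (Mmul n K (Mmul n C (Mmul n G M)))))
             (Mmul n G (Mmul n C (Mmul n K (Mmul n G M)))))) by (unfold E; mexact).
    eapply Meq_trans. apply T1. clear T1.
    assert (T2 : Meq n n
       (Madd (Msub (Msub (Mmul n G (Mmul n C M)) (Mmul n C (Mmul n G M))) (Mmul n G (Mmul n K (Mmul n C (Mmul n G M)))))
             (Mmul n G (Mmul n C (Mmul n K (Mmul n G M)))))
       (Madd (Msub (Msub (Mmul n G (Mmul n C M)) (Mmul n C X)) (Mmul n G (Mmul n K (Mmul n C X))))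
             (Mmul n G (Mmul n C (Mmul n K X))))).
    { apply Meq_add. apply Meq_sub. apply Meq_sub. apply Meq_refl. apply Meq_mulr, R1. apply Meq_mulr, Meq_mulr, Meq_mulr, R1. apply Meq_mulr, Meq_mulr, Meq_mulr, R1. }
    eapply Meq_trans. apply T2. clear T2.
    assert (T3 : Meq n n (Mmul n G (Mmul n C M)) (Msub (Mmul n G C) (Mmul n G (Mmul n C (Mmul n K X))))).
    { unfold M. rewrite Mmul_subr, Mmul_subr. apply Meq_sub; [|apply Meq_refl]. apply Meq_mulr, Meq_Mid_r. }
    eapply Meq_trans. apply Meq_add. apply Meq_sub. apply Meq_sub. apply T3. apply Meq_refl. apply Meq_refl. apply Meq_refl.
    clear T3.
    assert (T4 : Meq n n (Msub (Msub (Mmul n G C) (Mmul n C X)) (Mmul n G (Mmul n K (Mmul n C X))))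
                         (Msub (Msub (Mmul n G C) (Mmul n X C)) (Mmul n G (Mmul n K (Mmul n X C))))).
    { apply Meq_sub. apply Meq_sub. apply Meq_refl. apply HC. apply Meq_mulr, Meq_mulr, HC. }
    eapply Meq_trans with (Msub (Msub (Mmul n G C) (Mmul n C X)) (Mmul n G (Mmul n K (Mmul n C X)))).
    { mexact. }
    eapply Meq_trans. apply T4. clear T4.
    replace (Msub (Msub (Mmul n G C) (Mmul n X C)) (Mmul n G (Mmul n K (Mmul n X C))))
      with (Mmul n (Msub (Msub G (Mmul n G (Mmul n K X))) X) C) by (mnorm; mext; unfold Msub; ring).
    eapply Meq_trans. apply Meq_mull. apply Meq_sub. apply R1'. apply Meq_refl.
    rewrite Mmul_subl. intros i j Hi Hj. unfold Msub, Mz. ring. }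
  intros i j Hi Hj.
  assert (H1 : Meq n n E (Mmul n E (Mmul n M W))) by (apply Meq_sym; eapply Meq_trans; [apply Meq_mulr, HW1|apply Meq_Mid_r]).
  rewrite H1 by auto. rewrite <- Mmul_assoc.
  rewrite (Meq_mull n n n _ _ W HEM i j Hi Hj). rewrite Mmul_z_l. reflexivity.
Qed.

Variables (m : nat) (S U V : Mat).
Hypothesis HSyl : Meq n n (Madd (Mmul n S K) (Mmul n K S)) (Mmul m V U).
Hypothesis HSX : comm n S X.

Lemma Gx_alg Mx : Meq n n Mx (Msub Mz (Mmul n K (Mmul n (Mscale (RtoC (-2)) S) X))) ->
  Meq n n (Madd (Mmul n (Mmul n (Mscale (RtoC (-2)) S) X) W)
                (Mmul n X (Mscale (RtoC (-1)) (Mmul n W (Mmul n Mx W)))))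
          (Msub (Msub (Msub Mz (Mmul n G S)) (Mmul n S G)) (Mmul n G (Mmul m V (Mmul n U G)))).
Proof.
  intros Hx. pose proof (keycomm S HSX) as KC. unfold G in *.
  eapply Meq_trans. apply Meq_add. apply Meq_refl. apply Meq_mulr, Meq_scale, Meq_mulr, Meq_mull, Hx.
  eapply Meq_trans with (Madd (Mscale (RtoC (-2)) (Mmul n S (Mmul n X W)))
     (Mscale (RtoC (-1)) (Madd (Mmul n (Mmul n X W) (Mmul n (Msub (Mmul n K S) (Mmul n S K)) (Mmul n X W)))
                                (Mmul n (Mmul n X W) (Mmul n (Madd (Mmul n S K) (Mmul n K S)) (Mmul n X W)))))).
  { mexact. }
  eapply Meq_trans. apply Meq_add. apply Meq_refl. apply Meq_scale. apply Meq_add. apply Meq_sym, KC.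
  apply Meq_mulr, Meq_mull, HSyl.
  mexact.
Qed.

Let C2 := Mmul n S S.
Let C3 := Mmul n S (Mmul n S S).
Let VU := Mmul m V U.

Lemma comm_C2 : comm n C2 X.
Proof. unfold C2. apply comm_mull; auto. Qed.
Lemma comm_C3 : comm n C3 X.
Proof. unfold C3. apply comm_mull; auto. apply comm_mull; auto. Qed.

Lemma S3_C3 : Meq n n (Mpow n S 3) C3.
Proof.
  unfold C3. simpl. rewrite !Mmul_assoc. apply Meq_Mid_l.
Qed.

Lemma Gt_alg Mt : Meq n n Mt (Msub Mz (Mmul n K (Mmul n (Mscale (RtoC (-2)) (Mpow n S 3)) X))) ->
  Meq n n (Madd (Mmul n (Mmul n (Mscale (RtoC (-2)) (Mpow n S 3)) X) W)
                (Mmul n X (Mscale (RtoC (-1)) (Mmul n W (Mmul n Mt W)))))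
          (Madd (Madd (Msub (Msub (Msub Mz (Mmul n G C3)) (Mmul n C3 G))
                       (Mmul n G (Mmul n S (Mmul n S (Mmul n VU G)))))
                 (Mmul n G (Mmul n S (Mmul n VU (Mmul n S G)))))
                 (Mscale (RtoC (-1)) (Mmul n G (Mmul n VU (Mmul n S (Mmul n S G)))))).
Proof.
  intros Hx. pose proof (keycomm C3 comm_C3) as KC.
  eapply Meq_trans. apply Meq_add. apply Meq_refl. apply Meq_mulr, Meq_scale, Meq_mulr, Meq_mull, Hx.
  assert (HS3 : Meq n n (Mscale (RtoC (-2)) (Mpow n S 3)) (Mscale (RtoC (-2)) C3)) by (apply Meq_scale, S3_C3).
  eapply Meq_trans. apply Meq_add. apply Meq_mull, Meq_mull, HS3.
  apply Meq_mulr, Meq_scale, Meq_mulr, Meq_mull, Meq_sub. apply Meq_refl. apply Meq_mulr, Meq_mull, HS3.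
  set (SY := Madd (Mmul n S K) (Mmul n K S)).
  eapply Meq_trans with (Madd (Mscale (RtoC (-2)) (Mmul n C3 G))
     (Mscale (RtoC (-1)) (Madd (Mmul n G (Mmul n (Msub (Mmul n K C3) (Mmul n C3 K)) G))
        (Madd (Msub (Mmul n G (Mmul n S (Mmul n S (Mmul n SY G))))
                    (Mmul n G (Mmul n S (Mmul n SY (Mmul n S G)))))
              (Mmul n G (Mmul n SY (Mmul n S (Mmul n S G)))))))).
  { unfold G, C3, SY. mexact. }
  eapply Meq_trans. apply Meq_add. apply Meq_refl. apply Meq_scale. apply Meq_add. apply Meq_sym, KC.
  apply Meq_add. apply Meq_sub.
  apply Meq_mulr, Meq_mulr, Meq_mulr, Meq_mull, HSyl.
  apply Meq_mulr, Meq_mulr, Meq_mull, HSyl.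
  apply Meq_mulr, Meq_mull, HSyl.
  unfold G, C3, VU. mexact.
Qed.

Lemma Rel_alg : Meq n n (Mmul n S (Mmul n S G))
   (Madd (Msub (Mmul n G (Mmul n S S)) (Mmul n G (Mmul m V (Mmul n U (Mmul n S G)))))
         (Mmul n G (Mmul n S (Mmul m V (Mmul n U G))))).
Proof.
  pose proof (keycomm C2 comm_C2) as KC.
  set (SY := Madd (Mmul n S K) (Mmul n K S)).
  eapply Meq_trans with (Msub (Mmul n G C2) (Msub (Mmul n G C2) (Mmul n C2 G))).
  { unfold C2. mexact. }
  eapply Meq_trans. apply Meq_sub. apply Meq_refl. apply KC.
  eapply Meq_trans with (Msub (Mmul n G C2) (Msub (Mmul n G (Mmul n SY (Mmul n S G))) (Mmul n G (Mmul n S (Mmul n SY G))))).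
  { unfold C2, SY. mexact. }
  eapply Meq_trans. apply Meq_sub. apply Meq_refl. apply Meq_sub.
  apply Meq_mulr, Meq_mull, HSyl. apply Meq_mulr, Meq_mulr, Meq_mull, HSyl.
  unfold C2. mexact.
Qed.
End GAlg.

Import ListNotations.


Lemma Meq_refl_eq r c A B : A = B -> Meq r c A B.
Proof. intros ->; apply Meq_refl. Qed.

Section Main.
Variables (n m : nat) (S K U V : Mat).
Hypothesis HSyl : Meq n n (Madd (Mmul n S K) (Mmul n K S)) (Mmul m V U).

Definition Mf x t := Msub Mid (Mmul n K (Xi n S x t)).
Definition Wf x t := Minv n (Mf x t).
Definition Gf x t := Mmul n (Xi n S x t) (Wf x t).

Lemma Mf_cont x1 t1 : forall e, 0 < e -> exists d, 0 < d /\ forall x' t', Rabs (x' - x1) < d -> Rabs (t' - t1) < d ->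
  forall i j, (i < n)%nat -> (j < n)%nat -> cn (Cadd (Mf x' t' i j) (Copp (Mf x1 t1 i j))) < e.
Proof.
  intros e He. destruct (rb_exists n K) as [k0 Hk0]. set (kp := Rabs k0).
  assert (Hk : rb n K kp) by (apply rb_mono with k0; auto; apply RRle_abs).
  assert (Hkp : 0 <= kp) by apply Rabs_pos.
  destruct (Xi_cont n S x1 t1 (e / (kp + 1)) ltac:(apply Rdiv_lt_0_compat; lra)) as [d [Hd Hx]].
  exists d; split; auto. intros x' t' H1 H2 i j Hi Hj.
  assert (E : Cadd (Mf x' t' i j) (Copp (Mf x1 t1 i j)) =
              Copp (Csum (fun k => Cmul (K i k) (Cadd (Xi n S x' t' k j) (Copp (Xi n S x1 t1 k j)))) n)).
  { unfold Mf, Msub, Mmul. rewrite (Csum_ext (fun k => Cmul (K i k) (Cadd (Xi n S x' t' k j) (Copp (Xi n S x1 t1 k j)))) (fun k => Cadd (Cmul (K i k) (Xi n S x' t' k j)) (Copp (Cmul (K i k) (Xi n S x1 t1 k j))))) by (intros; cbv beta; ring).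
    rewrite Csum_add, Csum_opp. ring. }
  rewrite E, cn_opp. eapply Rle_lt_trans. apply cn_Csum.
  apply Rle_lt_trans with (Rsum (fun k => cn (K i k) * (e / (kp + 1))) n).
  { apply Rsum_le. intros k Hkk. eapply Rle_trans. apply cn_mul. apply Rmult_le_compat_l. apply cn_pos.
    left; apply Hx; auto. }
  rewrite (Rsum_ext _ (fun k => (e / (kp + 1)) * cn (K i k))) by (intros; ring).
  rewrite Rsum_mull. pose proof (Hk i Hi).
  apply Rle_lt_trans with (e / (kp + 1) * kp). apply Rmult_le_compat_l; auto. left; apply Rdiv_lt_0_compat; lra.
  apply Rmult_lt_reg_r with (kp + 1). lra. replace (e / (kp + 1) * kp * (kp + 1)) with (e * kp) by (field; lra). nra.
Qed.

Lemma W_near x1 t1 : Minvertible n (Mf x1 t1) ->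
  forall e, 0 < e -> exists d, 0 < d /\ forall x' t', Rabs (x' - x1) < d -> Rabs (t' - t1) < d ->
     Minvertible n (Mf x' t') /\
     forall i j, (i < n)%nat -> (j < n)%nat -> cn (Cadd (Wf x' t' i j) (Copp (Wf x1 t1 i j))) < e.
Proof. intros H. apply (inv_near n Mf x1 t1 (Mf_cont x1 t1) H). Qed.

Definition DGxM (g : Mat) := Msub (Msub (Msub Mz (Mmul n g S)) (Mmul n S g)) (Mmul n g (Mmul m V (Mmul n U g))).

Lemma G_dx x1 t1 : Minvertible n (Mf x1 t1) ->
  exists L, hasD n n (fun y => Gf y t1) x1 L /\ Meq n n L (DGxM (Gf x1 t1)).
Proof.
  intros Hinv.
  assert (HM : hasD n n (fun y => Mf y t1) x1 (Msub Mz (Madd (Mmul n Mz (Xi n S x1 t1)) (Mmul n K (Mmul n (Pm S) (Xi n S x1 t1)))))).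
  { unfold Mf. apply (hasD_sub n n (fun _ => Mid) (fun y => Mmul n K (Xi n S y t1))). apply hasD_const. apply (hasD_mul n n n (fun _ => K) (fun y => Xi n S y t1)). apply hasD_const. apply Xi_dx. }
  assert (Hc : forall e, 0 < e -> exists d, 0 < d /\ forall h, Rabs h < d ->
     Minvertible n (Mf (x1 + h) t1) /\
     forall i j, (i < n)%nat -> (j < n)%nat -> cn (Cadd (Minv n (Mf (x1 + h) t1) i j) (Copp (Minv n (Mf x1 t1) i j))) < e).
  { intros e He. destruct (W_near x1 t1 Hinv e He) as [d [Hd K1]]. exists d; split; auto.
    intros h Hh. apply K1. replace (x1 + h - x1) with h by ring; auto. rewrite Rminus_diag, Rabs_R0; auto. }
  pose proof (inv_deriv n (fun y => Mf y t1) x1 _ HM Hc) as HW.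
  eexists. split. unfold Gf. apply (hasD_mul n n n _ _ _ _ _ (Xi_dx n S x1 t1) HW).
  destruct (Minv_spec n _ Hinv) as [H1 H2].
  unfold DGxM, Gf, Wf. unfold Pm.
  apply (Gx_alg n K (Xi n S x1 t1) (Minv n (Mf x1 t1)) H1 H2 m S U V HSyl (comm_S_Xi n S x1 t1)).
  intros i j Hi Hj. unfold Msub, Madd. rewrite Mmul_z_l. unfold Mz. ring.
Qed.

Definition DGtM (g : Mat) :=
  Madd (Madd (Msub (Msub (Msub Mz (Mmul n g (Mmul n S (Mmul n S S))))
              (Mmul n (Mmul n S (Mmul n S S)) g))
           (Mmul n g (Mmul n S (Mmul n S (Mmul n (Mmul m V U) g)))))
        (Mmul n g (Mmul n S (Mmul n (Mmul m V U) (Mmul n S g)))))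
     (Mscale (RtoC (-1)) (Mmul n g (Mmul n (Mmul m V U) (Mmul n S (Mmul n S g))))).

Lemma G_dt x1 t1 : Minvertible n (Mf x1 t1) ->
  exists L, hasD n n (fun s => Gf x1 s) t1 L /\ Meq n n L (DGtM (Gf x1 t1)).
Proof.
  intros Hinv.
  assert (HM : hasD n n (fun s => Mf x1 s) t1 (Msub Mz (Madd (Mmul n Mz (Xi n S x1 t1)) (Mmul n K (Mmul n (Qm n S) (Xi n S x1 t1)))))).
  { unfold Mf. apply (hasD_sub n n (fun _ => Mid) (fun s => Mmul n K (Xi n S x1 s))). apply hasD_const. apply (hasD_mul n n n (fun _ => K) (fun s => Xi n S x1 s)). apply hasD_const. apply Xi_dt. }
  assert (Hc : forall e, 0 < e -> exists d, 0 < d /\ forall h, Rabs h < d ->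
     Minvertible n (Mf x1 (t1 + h)) /\
     forall i j, (i < n)%nat -> (j < n)%nat -> cn (Cadd (Minv n (Mf x1 (t1 + h)) i j) (Copp (Minv n (Mf x1 t1) i j))) < e).
  { intros e He. destruct (W_near x1 t1 Hinv e He) as [d [Hd K1]]. exists d; split; auto.
    intros h Hh. apply K1. rewrite Rminus_diag, Rabs_R0; auto. replace (t1 + h - t1) with h by ring; auto. }
  pose proof (inv_deriv n (fun s => Mf x1 s) t1 _ HM Hc) as HW.
  eexists. split. unfold Gf. apply (hasD_mul n n n _ _ _ _ _ (Xi_dt n S x1 t1) HW).
  destruct (Minv_spec n _ Hinv) as [H1 H2].
  unfold DGtM, Gf, Wf. unfold Qm, S3.
  apply (Gt_alg n K (Xi n S x1 t1) (Minv n (Mf x1 t1)) H1 H2 m S U V HSyl (comm_S_Xi n S x1 t1)).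
  intros i j Hi Hj. unfold Msub, Madd. rewrite Mmul_z_l. unfold Mz. ring.
Qed.

Lemma G_rel x1 t1 : Minvertible n (Mf x1 t1) ->
  Meq n n (wint n m S V U (Gf x1 t1) [aS; aS; aG]) (pint n m S V U (Gf x1 t1) rhsR).
Proof.
  intros Hinv. destruct (Minv_spec n _ Hinv) as [H1 H2].
  pose proof (Rel_alg n K (Xi n S x1 t1) (Minv n (Mf x1 t1)) H1 H2 m S U V HSyl (comm_S_Xi n S x1 t1)) as R.
  fold (Wf x1 t1) in R. fold (Gf x1 t1) in R.
  simpl. eapply Meq_trans. apply R. apply Meq_refl_eq.
  mext. unfold Madd, Msub, Mscale, Mzero. apply Ceq; simpl; ring.
Qed.
End Main.

Import ListNotations.


Definition phiP : poly := [(1%Z, [aU; aG; aV])].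
Definition DGx : poly := [((-1)%Z,[aG;aS]); ((-1)%Z,[aS;aG]); ((-1)%Z,[aG;aV;aU;aG])].
Definition DGt : poly := [((-1)%Z,[aG;aS;aS;aS]); ((-1)%Z,[aS;aS;aS;aG]); ((-1)%Z,[aG;aS;aS;aV;aU;aG]); (1%Z,[aG;aS;aV;aU;aS;aG]); ((-1)%Z,[aG;aV;aU;aS;aS;aG])].
Definition pu := collect (dpoly DGx phiP).
Definition pux := collect (dpoly DGx pu).
Definition puxx := collect (dpoly DGx pux).
Definition puxxx := collect (dpoly DGx puxx).
Definition put := collect (dpoly DGt pu).
Definition E4 := scalep 4 put ++ scalep (-1) puxxx ++ scalep (-6) (pmul pu pux ++ pmul pux pu).

Lemma pty_last r c p : pty r c p = true -> forall c0 v, In (c0, v) p -> v <> nil /\ acol (last v aG) = c.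
Proof. intros H c0 v Hin. pose proof (pty_spec r c p H c0 v Hin). split; [eapply wty_nonnil|eapply wty_last]; eauto. Qed.
Lemma pty_nonemp r c p : pty r c p = true -> nonemp p.
Proof. intros H c0 v Hin. apply (pty_last r c p H c0 v Hin). Qed.

Section Final.
Variables (n m : nat) (S K U V : Mat).
Hypothesis HSyl : Meq n n (Madd (Mmul n S K) (Mmul n K S)) (Mmul m V U).

Lemma DGx_pint g : Meq n n (DGxM n m S U V g) (pint n m S V U g DGx).
Proof. apply Meq_refl_eq. unfold DGxM. simpl. mext. unfold Madd, Msub, Mscale, Mzero, Mz. apply Ceq; simpl; ring. Qed.
Lemma DGt_pint g : Meq n n (DGtM n m S U V g) (pint n m S V U g DGt).
Proof. apply Meq_refl_eq. unfold DGtM. simpl. rewrite !Mmul_assoc. mext. unfold Madd, Msub, Mscale, Mzero, Mz. apply Ceq; simpl; ring. Qed.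

Definition uF (p : poly) x t := pint n m S V U (Gf n S K x t) p.

Lemma dx_step x1 t1 p : Minvertible n (Mf n S K x1 t1) -> pty Dm Dm p = true ->
  hasD m m (fun y => uF p y t1) x1 (uF (collect (dpoly DGx p)) x1 t1).
Proof.
  intros Hinv Hp. destruct (G_dx n m S K U V HSyl x1 t1 Hinv) as [L [HL HLe]].
  unfold uF. rewrite collect_sound.
  assert (HLe' : Meq n n L (pint n m S V U (Gf n S K x1 t1) DGx)) by (eapply Meq_trans; [apply HLe|apply DGx_pint]).
  exact (dpoly_sound n m S V U (fun y => Gf n S K y t1) x1 L DGx HL HLe' eq_refl p Dm Dm Hp).
Qed.
Lemma dt_step x1 t1 p : Minvertible n (Mf n S K x1 t1) -> pty Dm Dm p = true ->
  hasD m m (fun s => uF p x1 s) t1 (uF (collect (dpoly DGt p)) x1 t1).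
Proof.
  intros Hinv Hp. destruct (G_dt n m S K U V HSyl x1 t1 Hinv) as [L [HL HLe]].
  unfold uF. rewrite collect_sound.
  assert (HLe' : Meq n n L (pint n m S V U (Gf n S K x1 t1) DGt)) by (eapply Meq_trans; [apply HLe|apply DGt_pint]).
  exact (dpoly_sound n m S V U (fun s => Gf n S K x1 s) t1 L DGt HL HLe' eq_refl p Dm Dm Hp).
Qed.

Lemma Phi_eq x t : Phi n S K U V x t = uF phiP x t.
Proof.
  unfold Phi, uF, Gf, Wf, Mf. simpl. rewrite !Mmul_assoc. mext. unfold Madd, Mscale, Mzero. apply Ceq; simpl; ring.
Qed.

Lemma kdv_id x t : Minvertible n (Mf n S K x t) ->
  Meq m m
    (Msub (Msub (uF put x t) (Mscale (RtoC (/ 4)) (uF puxxx x t)))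
          (Mscale (RtoC (3 / 2)) (Madd (Mmul m (uF pu x t) (uF pux x t)) (Mmul m (uF pux x t) (uF pu x t)))))
    (fun _ _ => CZ).
Proof.
  intros Hinv.
  assert (HR := G_rel n m S K U V HSyl x t Hinv).
  assert (Z : pint n m S V U (Gf n S K x t) E4 = Mzero).
  { rewrite <- (nfiter_sound n m S V U _ HR 10), <- collect_sound. apply allzero_sound. vm_compute. reflexivity. }
  unfold E4 in Z. rewrite !pint_app, !pint_scalep, !pint_app in Z.
  rewrite !(pmul_sound n m S V U _ _ _ Dm) in Z.
  2,4: apply (pty_last Dm Dm); vm_compute; reflexivity.
  2,3: apply (pty_nonemp Dm Dm); vm_compute; reflexivity.
  intros i j Hi Hj.
  change (dI n m Dm) with m in Z.
  assert (Zij := f_equal (fun M => M i j) Z). cbv beta in Zij. unfold uF.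
  set (a := pint n m S V U (Gf n S K x t) put) in *.
  set (b := pint n m S V U (Gf n S K x t) puxxx) in *.
  set (c := Mmul m (pint n m S V U (Gf n S K x t) pu) (pint n m S V U (Gf n S K x t) pux)) in *.
  set (d := Mmul m (pint n m S V U (Gf n S K x t) pux) (pint n m S V U (Gf n S K x t) pu)) in *.
  clearbody a b c d.
  unfold Madd, Msub, Mscale, Mzero in *.
  assert (Zr := f_equal re Zij). assert (Zi := f_equal im Zij). simpl in Zr, Zi.
  apply Ceq; simpl; lra.
Qed.
End Final.

Theorem mainTheorem17 (n m : nat) (S K U V : Mat) :
  (* S, K : n x n ;  U : m x n ;  V : n x m ;  S K + K S = V U *)
  Meq n n (Madd (Mmul n S K) (Mmul n K S)) (Mmul m V U) ->
  forall x t : R,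
    Minvertible n (Msub Mid (Mmul n K (Xi n S x t))) ->
    exists (delta : R) (u ux uxx uxxx ut : R -> R -> Mat),
      0 < delta /\
      (forall x' t', Rabs (x' - x) < delta -> Rabs (t' - t) < delta ->
         has_dx m m (Phi n S K U V) x' t' (u x' t') /\
         has_dx m m u x' t' (ux x' t') /\
         has_dx m m ux x' t' (uxx x' t')) /\
      has_dx m m uxx x t (uxxx x t) /\
      has_dt m m u x t (ut x t) /\
      (* u_t - 1/4 u_xxx - 3/2 (u u_x + u_x u) = 0 *)
      Meq m m
        (Msub (Msub (ut x t) (Mscale (RtoC (/ 4)) (uxxx x t)))
              (Mscale (RtoC (3 / 2))
                 (Madd (Mmul m (u x t) (ux x t)) (Mmul m (ux x t) (u x t)))))
        (fun _ _ => C0).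
Proof.
  intros HSyl x t Hinv.
  change (Minvertible n (Mf n S K x t)) in Hinv.
  destruct (W_near n S K x t Hinv 1 Rlt_0_1) as [d [Hd Hbox]].
  exists d, (uF n m S K U V pu), (uF n m S K U V pux), (uF n m S K U V puxx), (uF n m S K U V puxxx), (uF n m S K U V put).
  split; [exact Hd|]. split; [|split; [|split]].
  - intros x' t' Hx Ht. destruct (Hbox x' t' Hx Ht) as [Hi' _].
    split; [|split].
    + change (hasD m m (fun y => Phi n S K U V y t') x' (uF n m S K U V pu x' t')).
      apply hasD_fext with (f := fun y => uF n m S K U V phiP y t').
      { intros; symmetry; apply Phi_eq. }
      apply (dx_step n m S K U V HSyl x' t' phiP Hi'). vm_compute; reflexivity.
    + change (hasD m m (fun y => uF n m S K U V pu y t') x' (uF n m S K U V pux x' t')).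
      apply (dx_step n m S K U V HSyl x' t' pu Hi'). vm_compute; reflexivity.
    + change (hasD m m (fun y => uF n m S K U V pux y t') x' (uF n m S K U V puxx x' t')).
      apply (dx_step n m S K U V HSyl x' t' pux Hi'). vm_compute; reflexivity.
  - change (hasD m m (fun y => uF n m S K U V puxx y t) x (uF n m S K U V puxxx x t)).
    apply (dx_step n m S K U V HSyl x t puxx Hinv). vm_compute; reflexivity.
  - change (hasD m m (fun s => uF n m S K U V pu x s) t (uF n m S K U V put x t)).
    apply (dt_step n m S K U V HSyl x t pu Hinv). vm_compute; reflexivity.
  - apply (kdv_id n m S K U V HSyl x t Hinv).
Qed.
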